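(* Let $1\le i,j,k,l\le n$ with $i<j$ and $k<l$. In ${\boldsymbol U}_{v}(\mathfrak q_n)$: if $i<j<k<l$, or $i<k<l<j$, or ($i=k$ and $j=l$), or $k<l<i<j$, or $k<i<j<l$, then $\mathsf E_{i,j}\overline{\mathsf E}_{k,l}=\overline{\mathsf E}_{k,l}\mathsf E_{i,j}$; moreover \[ \mathsf E_{i,j}\overline{\mathsf E}_{k,l}=\begin{cases} v^{-1}\overline{\mathsf E}_{k,l}\mathsf E_{i,j}-\overline{\mathsf E}_{i,l} & (i<j=k<l),\\ v\,\overline{\mathsf E}_{k,l}\mathsf E_{i,j} & (i=k<j<l),\\ \overline{\mathsf E}_{k,l}\mathsf E_{i,j}+(v-v^{-1})\mathsf E_{k,j}\overline{\mathsf E}_{i,l} & (i<k<j<l),\\ v^{-1}\overline{\mathsf E}_{k,l}\mathsf E_{i,j}+\overline{\mathsf E}_{i,j}\mathsf E_{k,j}-v^{-1}\mathsf E_{k,j}\overline{\mathsf E}_{i,j} & (i<k<j=l),\\ v^{-1}\overline{\mathsf E}_{k,l}\mathsf E_{i,j}-(\mathsf E_{\bar i}\mathsf E_{i+1,j}-v^{-1}\mathsf E_{i+1,j}\mathsf E_{\bar i})\mathsf E_{k,i}+v^{-1}\mathsf E_{k,i}(\mathsf E_{\bar i}\mathsf E_{i+1,j}-v^{-1}\mathsf E_{i+1,j}\mathsf E_{\bar i}) & (k<l=i<j,\ j>i+1),\\ v^{-1}\overline{\mathsf E}_{k,l}\mathsf E_{i,j} & (k=i<l<j),\\ \overline{\mathsf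 E}_{k,l}\mathsf E_{i,j}+v^{-1}\overline{\mathsf E}_{i,l}\mathsf E_{k,j}-v\,\mathsf E_{k,j}\overline{\mathsf E}_{i,l} & (k<i<l<j),\\ v\,\overline{\mathsf E}_{k,l}\mathsf E_{i,j}-v\,\mathsf E_{k,j}\overline{\mathsf E}_{i,j}+\overline{\mathsf E}_{i,j}\mathsf E_{k,j} & (k<i<j=l). \end{cases} \]
   Context: Let $v$ be an indeterminate. The quantum queer superalgebra ${\boldsymbol U}_{v}(\mathfrak q_n)$ is the associative superalgebra over $\mathbb Q(v)$ generated by even generators $\mathsf K_i,\mathsf K_i^{-1}$ ($1\le i\le n$), $\mathsf E_j,\mathsf F_j$ ($1\le j\le n-1$) and odd generators $\mathsf K_{\bar i}$ ($1\le i\le n$), $\mathsf E_{\bar j},\mathsf F_{\bar j}$ ($1\le j\le n-1$), subject to the following relations (indices are taken only where they make sense), where $(\epsilon_i,\alpha_j)=\delta_{i,j}-\delta_{i,j+1}$: (QQ1) $\mathsf K_i\mathsf K_i^{-1}=\mathsf K_i^{-1}\mathsf K_i=1$, $\mathsf K_i\mathsf K_j=\mathsf K_j\mathsf K_i$, $\mathsf K_i\mathsf K_{\bar j}=\mathsf K_{\bar j}\mathsf K_i$, $\mathsf K_{\bar i}\mathsf K_{\bar j}+\mathsf K_{\bar j}\mathsf K_{\bar i}=2\delta_{i,j}\frac{\mathsf K_i^2-\mathsf K_i^{-2}}{v^2-v^{-2}}$. (QQ2) $\mathsf K_i\mathsf E_j=v^{(\epsilon_i,\alpha_j)}\mathsf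 E_j\mathsf K_i$, $\mathsf K_i\mathsf E_{\bar j}=v^{(\epsilon_i,\alpha_j)}\mathsf E_{\bar j}\mathsf K_i$, $\mathsf K_i\mathsf F_j=v^{-(\epsilon_i,\alpha_j)}\mathsf F_j\mathsf K_i$, $\mathsf K_i\mathsf F_{\bar j}=v^{-(\epsilon_i,\alpha_j)}\mathsf F_{\bar j}\mathsf K_i$. (QQ3) $\mathsf K_{\bar i}\mathsf E_i-v\mathsf E_i\mathsf K_{\bar i}=\mathsf E_{\bar i}\mathsf K_i^{-1}$, $v\mathsf K_{\bar i}\mathsf E_{i-1}-\mathsf E_{i-1}\mathsf K_{\bar i}=-\mathsf K_i^{-1}\mathsf E_{\overline{i-1}}$, $\mathsf K_{\bar i}\mathsf F_i-v\mathsf F_i\mathsf K_{\bar i}=-\mathsf F_{\bar i}\mathsf K_i$, $v\mathsf K_{\bar i}\mathsf F_{i-1}-\mathsf F_{i-1}\mathsf K_{\bar i}=\mathsf K_i\mathsf F_{\overline{i-1}}$, $\mathsf K_{\bar i}\mathsf E_{\bar i}+v\mathsf E_{\bar i}\mathsf K_{\bar i}=\mathsf E_i\mathsf K_i^{-1}$, $v\mathsf K_{\bar i}\mathsf E_{\overline{i-1}}+\mathsf E_{\overline{i-1}}\mathsf K_{\bar i}=\mathsf K_i^{-1}\mathsf E_{i-1}$, $\mathsf K_{\bar i}\mathsf F_{\bar i}+v\mathsf F_{\bar i}\mathsf K_{\bar i}=\mathsf F_i\mathsf K_i$, $v\mathsf K_{\bar i}\mathsf F_{\overline{i-1}}+\mathsf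 F_{\overline{i-1}}\mathsf K_{\bar i}=\mathsf K_i\mathsf F_{i-1}$, and for $j\ne i,i-1$: $\mathsf K_{\bar i}\mathsf E_j=\mathsf E_j\mathsf K_{\bar i}$, $\mathsf K_{\bar i}\mathsf F_j=\mathsf F_j\mathsf K_{\bar i}$, $\mathsf K_{\bar i}\mathsf E_{\bar j}=-\mathsf E_{\bar j}\mathsf K_{\bar i}$, $\mathsf K_{\bar i}\mathsf F_{\bar j}=-\mathsf F_{\bar j}\mathsf K_{\bar i}$. (QQ4) $\mathsf E_i\mathsf F_j-\mathsf F_j\mathsf E_i=\delta_{i,j}\frac{\mathsf K_i\mathsf K_{i+1}^{-1}-\mathsf K_i^{-1}\mathsf K_{i+1}}{v-v^{-1}}$, $\mathsf E_{\bar i}\mathsf F_{\bar j}+\mathsf F_{\bar j}\mathsf E_{\bar i}=\delta_{i,j}\big(\frac{\mathsf K_i\mathsf K_{i+1}-\mathsf K_i^{-1}\mathsf K_{i+1}^{-1}}{v-v^{-1}}+(v-v^{-1})\mathsf K_{\bar i}\mathsf K_{\overline{i+1}}\big)$, $\mathsf E_i\mathsf F_{\bar j}-\mathsf F_{\bar j}\mathsf E_i=\delta_{i,j}(\mathsf K_{i+1}^{-1}\mathsf K_{\bar i}-\mathsf K_{\overline{i+1}}\mathsf K_i^{-1})$, $\mathsf E_{\bar i}\mathsf F_j-\mathsf F_j\mathsf E_{\bar i}=\delta_{i,j}(\mathsf K_{i+1}\mathsf K_{\bar i}-\mathsf K_{\overline{i+1}}\mathsf K_i)$. (QQ5) $\mathsf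 E_{\bar i}^2=-\frac{v-v^{-1}}{v+v^{-1}}\mathsf E_i^2$, $\mathsf F_{\bar i}^2=\frac{v-v^{-1}}{v+v^{-1}}\mathsf F_i^2$; for $|i-j|\ne1$: $\mathsf E_i\mathsf E_{\bar j}=\mathsf E_{\bar j}\mathsf E_i$, $\mathsf F_i\mathsf F_{\bar j}=\mathsf F_{\bar j}\mathsf F_i$; for $|i-j|>1$: $\mathsf E_i\mathsf E_j=\mathsf E_j\mathsf E_i$, $\mathsf F_i\mathsf F_j=\mathsf F_j\mathsf F_i$, $\mathsf E_{\bar i}\mathsf E_{\bar j}=-\mathsf E_{\bar j}\mathsf E_{\bar i}$, $\mathsf F_{\bar i}\mathsf F_{\bar j}=-\mathsf F_{\bar j}\mathsf F_{\bar i}$; $\mathsf E_i\mathsf E_{i+1}-v\mathsf E_{i+1}\mathsf E_i=\mathsf E_{\bar i}\mathsf E_{\overline{i+1}}+v\mathsf E_{\overline{i+1}}\mathsf E_{\bar i}$, $\mathsf E_i\mathsf E_{\overline{i+1}}-v\mathsf E_{\overline{i+1}}\mathsf E_i=\mathsf E_{\bar i}\mathsf E_{i+1}-v\mathsf E_{i+1}\mathsf E_{\bar i}$, $\mathsf F_i\mathsf F_{i+1}-v\mathsf F_{i+1}\mathsf F_i=-(\mathsf F_{\bar i}\mathsf F_{\overline{i+1}}+v\mathsf F_{\overline{i+1}}\mathsf F_{\bar i})$, $\mathsf F_i\mathsf F_{\overline{i+1}}-v\mathsf F_{\overline{i+1}}\mathsf F_i=\mathsf F_{\bar i}\mathsf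 F_{i+1}-v\mathsf F_{i+1}\mathsf F_{\bar i}$. (QQ6) for $|i-j|=1$: $\mathsf E_i^2X-(v+v^{-1})\mathsf E_iX\mathsf E_i+X\mathsf E_i^2=0$ for $X\in\{\mathsf E_j,\mathsf E_{\bar j}\}$ and $\mathsf F_i^2Y-(v+v^{-1})\mathsf F_iY\mathsf F_i+Y\mathsf F_i^2=0$ for $Y\in\{\mathsf F_j,\mathsf F_{\bar j}\}$. Quantum root vectors: for $1\le i\le n-1$ put $\mathsf E_{i,i+1}=\mathsf E_i$, $\overline{\mathsf E}_{i,i+1}=\mathsf E_{\bar i}$, $\mathsf E_{i+1,i}=\mathsf F_i$, $\overline{\mathsf E}_{i+1,i}=\mathsf F_{\bar i}$, and recursively for $i+1<j\le n$: $\mathsf E_{i,j}=-\mathsf E_{i,j-1}\mathsf E_{j-1}+v^{-1}\mathsf E_{j-1}\mathsf E_{i,j-1}$, $\overline{\mathsf E}_{i,j}=-\mathsf E_{i,j-1}\mathsf E_{\overline{j-1}}+v^{-1}\mathsf E_{\overline{j-1}}\mathsf E_{i,j-1}$, $\mathsf E_{j,i}=-\mathsf F_{j-1}\mathsf E_{j-1,i}+v\mathsf E_{j-1,i}\mathsf F_{j-1}$, $\overline{\mathsf E}_{j,i}=-\mathsf F_{\overline{j-1}}\mathsf E_{j-1,i}+v\mathsf E_{j-1,i}\mathsf F_{\overline{j-1}}$. *)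

(* Defs.v *)
From HB Require Import structures.
From mathcomp Require Import all_boot all_order all_algebra.
Set Implicit Arguments.
Unset Strict Implicit.
Unset Printing Implicit Defensive.
Import Order.TTheory GRing.Theory Num.Theory.
Local Open Scope ring_scope.

Definition Qv : fieldType := {fraction {poly rat}}.
Definition vv : Qv := FracField.tofrac ('X : {poly rat}).

(* (epsilon_i, alpha_j) exponent:  v^{(eps_i,alpha_j)} *)
Definition vpw (i j : nat) : Qv :=
  if i == j then vv else if i == j.+1 then vv^-1 else 1.

Section Rels.
Variable A : algType Qv.
Variable n : nat.
(* Generators, indexed by natural numbers with the paper's 1-based
   conventions: K, Kinv, Kb (= K_bar) for 1 <= i <= n;
   E, F, Eb (= E_bar), Fb (= F_bar) for 1 <= j <= n-1.
   Values at other indices are irrelevant (no relation involves them). *)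
Variables (K Ki Kb E F Eb Fb : nat -> A).

Definition inK i := (1 <= i <= n)%N.
Definition inE j := (1 <= j <= n.-1)%N.

Record qq_rels : Prop := QQRels {
  qq1a : forall i, inK i -> K i * Ki i = 1 /\ Ki i * K i = 1;
  qq1b : forall i j, inK i -> inK j -> K i * K j = K j * K i;
  qq1c : forall i j, inK i -> inK j -> K i * Kb j = Kb j * K i;
  qq1d : forall i j, inK i -> inK j ->
    Kb i * Kb j + Kb j * Kb i =
    (if i == j then (2 * (vv ^+ 2 - vv ^- 2)^-1) *: (K i ^+ 2 - Ki i ^+ 2) else 0);
  qq2a : forall i j, inK i -> inE j -> K i * E j = vpw i j *: (E j * K i);
  qq2b : forall i j, inK i -> inE j -> K i * Eb j = vpw i j *: (Eb j * K i);
  qq2c : forall i j, inK i -> inE j -> K i * F j = (vpw i j)^-1 *: (F j * K i);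
  qq2d : forall i j, inK i -> inE j -> K i * Fb j = (vpw i j)^-1 *: (Fb j * K i);
  (* QQ3, relations with j = i (need 1 <= i <= n-1) *)
  qq3a : forall i, inK i -> inE i -> Kb i * E i - vv *: (E i * Kb i) = Eb i * Ki i;
  qq3c : forall i, inK i -> inE i -> Kb i * F i - vv *: (F i * Kb i) = - (Fb i * K i);
  qq3e : forall i, inK i -> inE i -> Kb i * Eb i + vv *: (Eb i * Kb i) = E i * Ki i;
  qq3g : forall i, inK i -> inE i -> Kb i * Fb i + vv *: (Fb i * Kb i) = F i * K i;
  (* QQ3, relations with j = i-1 (need 2 <= i <= n) *)
  qq3b : forall i, inK i -> inE i.-1 -> (1 < i)%N ->
    vv *: (Kb i * E i.-1) - E i.-1 * Kb i = - (Ki i * Eb i.-1);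
  qq3d : forall i, inK i -> inE i.-1 -> (1 < i)%N ->
    vv *: (Kb i * F i.-1) - F i.-1 * Kb i = K i * Fb i.-1;
  qq3f : forall i, inK i -> inE i.-1 -> (1 < i)%N ->
    vv *: (Kb i * Eb i.-1) + Eb i.-1 * Kb i = Ki i * E i.-1;
  qq3h : forall i, inK i -> inE i.-1 -> (1 < i)%N ->
    vv *: (Kb i * Fb i.-1) + Fb i.-1 * Kb i = K i * F i.-1;
  (* QQ3, j <> i, i-1 *)
  qq3i : forall i j, inK i -> inE j -> j != i -> j.+1 != i ->
    [/\ Kb i * E j = E j * Kb i, Kb i * F j = F j * Kb i,
        Kb i * Eb j = - (Eb j * Kb i) & Kb i * Fb j = - (Fb j * Kb i)];
  qq4a : forall i j, inE i -> inE j ->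
    E i * F j - F j * E i =
    (if i == j then (vv - vv^-1)^-1 *: (K i * Ki i.+1 - Ki i * K i.+1) else 0);
  qq4b : forall i j, inE i -> inE j ->
    Eb i * Fb j + Fb j * Eb i =
    (if i == j then (vv - vv^-1)^-1 *: (K i * K i.+1 - Ki i * Ki i.+1)
                    + (vv - vv^-1) *: (Kb i * Kb i.+1) else 0);
  qq4c : forall i j, inE i -> inE j ->
    E i * Fb j - Fb j * E i =
    (if i == j then Ki i.+1 * Kb i - Kb i.+1 * Ki i else 0);
  qq4d : forall i j, inE i -> inE j ->
    Eb i * F j - F j * Eb i =
    (if i == j then K i.+1 * Kb i - Kb i.+1 * K i else 0);
  qq5a : forall i, inE i ->
    Eb i ^+ 2 = - ((vv - vv^-1) / (vv + vv^-1)) *: E i ^+ 2;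
  qq5b : forall i, inE i ->
    Fb i ^+ 2 = ((vv - vv^-1) / (vv + vv^-1)) *: F i ^+ 2;
  qq5c : forall i j, inE i -> inE j -> i != j.+1 -> j != i.+1 ->
    E i * Eb j = Eb j * E i /\ F i * Fb j = Fb j * F i;
  qq5d : forall i j, inE i -> inE j -> (i.+1 < j)%N || (j.+1 < i)%N ->
    [/\ E i * E j = E j * E i, F i * F j = F j * F i,
        Eb i * Eb j = - (Eb j * Eb i) & Fb i * Fb j = - (Fb j * Fb i)];
  qq5e : forall i, inE i -> inE i.+1 ->
    E i * E i.+1 - vv *: (E i.+1 * E i) = Eb i * Eb i.+1 + vv *: (Eb i.+1 * Eb i);
  qq5f : forall i, inE i -> inE i.+1 ->
    E i * Eb i.+1 - vv *: (Eb i.+1 * E i) = Eb i * E i.+1 - vv *: (E i.+1 * Eb i);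
  qq5g : forall i, inE i -> inE i.+1 ->
    F i * F i.+1 - vv *: (F i.+1 * F i) = - (Fb i * Fb i.+1 + vv *: (Fb i.+1 * Fb i));
  qq5h : forall i, inE i -> inE i.+1 ->
    F i * Fb i.+1 - vv *: (Fb i.+1 * F i) = Fb i * F i.+1 - vv *: (F i.+1 * Fb i);
  qq6 : forall i j, inE i -> inE j -> (i == j.+1) || (j == i.+1) ->
    [/\ E i ^+ 2 * E j - (vv + vv^-1) *: (E i * E j * E i) + E j * E i ^+ 2 = 0,
        E i ^+ 2 * Eb j - (vv + vv^-1) *: (E i * Eb j * E i) + Eb j * E i ^+ 2 = 0,
        F i ^+ 2 * F j - (vv + vv^-1) *: (F i * F j * F i) + F j * F i ^+ 2 = 0 &
        F i ^+ 2 * Fb j - (vv + vv^-1) *: (F i * Fb j * F i) + Fb j * F i ^+ 2 = 0]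
}.

(* Upper quantum root vectors.  rootE i m = E_{i, i+1+m},
   rootEb i m = Ebar_{i, i+1+m}. *)
Fixpoint rootE (i m : nat) : A :=
  match m with
  | 0 => E i
  | m'.+1 => - (rootE i m' * E (i + m)%N) + vv^-1 *: (E (i + m)%N * rootE i m')
  end.

Definition rootEb (i m : nat) : A :=
  match m with
  | 0 => Eb i
  | m'.+1 => - (rootE i m' * Eb (i + m)%N) + vv^-1 *: (Eb (i + m)%N * rootE i m')
  end.

Definition Eij (i j : nat) : A := rootE i (j - i.+1).
Definition Ebij (i j : nat) : A := rootEb i (j - i.+1).

End Rels.

(* Main.v *)
Require Import Defs.
From HB Require Import structures.
From mathcomp Require Import all_boot all_order all_algebra zify.
Import Order.TTheory GRing.Theory Num.Theory.
Set Implicit Arguments. Unset Strict Implicit. Unset Printing Implicit Defensive.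
Local Open Scope ring_scope.


Inductive cf := CV | CVi | CZ of int | CAdd of cf & cf | CMul of cf & cf | CNeg of cf.
Inductive term := TAt of nat | TAdd of term & term | TSub of term & term
  | TMul of term & term | TSc of cf & term | TNeg of term | TZero.

Fixpoint cfI (c : cf) : Qv := match c with
  | CV => vv | CVi => vv^-1 | CZ z => z%:~R
  | CAdd a b => cfI a + cfI b | CMul a b => cfI a * cfI b | CNeg a => - cfI a end.

Definition lp := seq (int * int).
Definition mono := (seq nat * int * int)%type.

Definition lpmul (p q : lp) : lp := [seq (a.1 + b.1, a.2 * b.2) | a <- p, b <- q].
Definition lpneg (p : lp) : lp := [seq (a.1, - a.2) | a <- p].
Fixpoint cfN (c : cf) : lp := match c with
  | CV => [:: (1%Z, 1%Z)] | CVi => [:: ((-1)%Z, 1%Z)] | CZ z => [:: (0%Z, z)]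
  | CAdd a b => cfN a ++ cfN b | CMul a b => lpmul (cfN a) (cfN b)
  | CNeg a => lpneg (cfN a) end.

Definition mneg (p : seq mono) : seq mono := [seq (m.1, - m.2) | m <- p].
Definition mmul (p q : seq mono) : seq mono :=
  [seq (a.1.1 ++ b.1.1, a.1.2 + b.1.2, a.2 * b.2) | a <- p, b <- q].
Definition msc (l : lp) (p : seq mono) : seq mono :=
  [seq (m.1.1, a.1 + m.1.2, a.2 * m.2) | a <- l, m <- p].

Fixpoint tN (t : term) : seq mono := match t with
  | TAt k => [:: ([:: k], 0%Z, 1%Z)]
  | TAdd a b => tN a ++ tN b
  | TSub a b => tN a ++ mneg (tN b)
  | TMul a b => mmul (tN a) (tN b)
  | TSc c a => msc (cfN c) (tN a)
  | TNeg a => mneg (tN a)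
  | TZero => [::] end.

Fixpoint sumz (s : seq int) : int := if s is a :: s' then a + sumz s' else 0.
Definition zeroq (s : seq mono) : bool :=
  all (fun k => sumz [seq m.2 | m <- s & m.1 == k] == 0) [seq m.1 | m <- s].

Definition centry := (lp * seq nat * nat * seq nat)%type.
Definition hN (hyps : seq (term * term)) (h : nat) : seq mono :=
  let ab := nth (TZero, TZero) hyps h in tN ab.1 ++ mneg (tN ab.2).
Definition entryN hyps (e : centry) : seq mono :=
  msc e.1.1.1 (mmul (mmul [:: (e.1.1.2, 0%Z, 1%Z)] (hN hyps e.1.2)) [:: (e.2, 0%Z, 1%Z)]).
Definition checkC (hyps : seq (term * term)) (s : lp) (cert : seq centry) (t1 t2 : term) : bool :=
  zeroq (msc s (tN t1 ++ mneg (tN t2)) ++ mneg (flatten [seq entryN hyps e | e <- cert])).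

Lemma vv_neq0 : vv != 0.
Proof. by rewrite /vv -(tofrac0 _) tofrac_eq polyX_eq0. Qed.

Section Interp.
Variable A : algType Qv.
Variable env : seq A.

Fixpoint tI (t : term) : A := match t with
  | TAt k => nth 0 env k
  | TAdd a b => tI a + tI b | TSub a b => tI a - tI b
  | TMul a b => tI a * tI b | TSc c a => cfI c *: tI a
  | TNeg a => - tI a | TZero => 0 end.

Fixpoint holds (hyps : seq (term * term)) : Prop :=
  if hyps is h :: hs then tI h.1 = tI h.2 /\ holds hs else True.

Definition lpI (l : lp) : Qv := \sum_(a <- l) a.2%:~R * vv ^ a.1.
Definition wordI (w : seq nat) : A := foldr (fun k acc => nth 0 env k * acc) 1 w.
Definition monI (m : mono) : A := (m.2%:~R * vv ^ m.1.2) *: wordI m.1.1.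
Definition polyI (p : seq mono) : A := \sum_(m <- p) monI m.

Lemma wordI_cat w1 w2 : wordI (w1 ++ w2) = wordI w1 * wordI w2.
Proof. by elim: w1 => [|k w IH] /=; rewrite ?mul1r // IH mulrA. Qed.

Lemma lpI_cat p q : lpI (p ++ q) = lpI p + lpI q.
Proof. by rewrite /lpI big_cat. Qed.

Lemma lpI_mul p q : lpI (lpmul p q) = lpI p * lpI q.
Proof.
rewrite /lpI /lpmul big_allpairs_dep mulr_suml; apply: eq_bigr => a _.
rewrite mulr_sumr; apply: eq_bigr => b _ /=.
by rewrite intrM expfzDr ?vv_neq0 // mulrACA.
Qed.

Lemma lpI_neg p : lpI (lpneg p) = - lpI p.
Proof. by rewrite /lpI big_map -sumrN; apply: eq_bigr => a _ /=; rewrite mulrNz mulNr. Qed.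

Lemma cfN_ok c : lpI (cfN c) = cfI c.
Proof.
elim: c => [| |z|a IHa b IHb|a IHa b IHb|a IHa] /=.
- by rewrite /lpI big_seq1 /= expr1z mul1r.
- by rewrite /lpI big_seq1 /= exprN1 mul1r.
- by rewrite /lpI big_seq1 /= expr0z mulr1.
- by rewrite lpI_cat IHa IHb.
- by rewrite lpI_mul IHa IHb.
- by rewrite lpI_neg IHa.
Qed.

Lemma polyI_cat p q : polyI (p ++ q) = polyI p + polyI q.
Proof. by rewrite /polyI big_cat. Qed.

Lemma polyI_neg p : polyI (mneg p) = - polyI p.
Proof.
rewrite /polyI big_map -sumrN; apply: eq_bigr => m _.
by rewrite /monI /= mulrNz mulNr scaleNr.
Qed.

Lemma polyI_mul p q : polyI (mmul p q) = polyI p * polyI q.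
Proof.
rewrite /polyI /mmul big_allpairs_dep mulr_suml; apply: eq_bigr => a _.
rewrite mulr_sumr; apply: eq_bigr => b _ /=.
rewrite /monI /= wordI_cat -scalerAl -scalerAr scalerA intrM expfzDr ?vv_neq0 //.
by rewrite mulrACA.
Qed.

Lemma polyI_sc l p : polyI (msc l p) = lpI l *: polyI p.
Proof.
rewrite /polyI /lpI /msc big_allpairs_dep scaler_suml; apply: eq_bigr => a _.
rewrite scaler_sumr; apply: eq_bigr => m _ /=.
rewrite /monI /= scalerA intrM expfzDr ?vv_neq0 //.
by rewrite mulrACA.
Qed.

Lemma tN_ok t : polyI (tN t) = tI t.
Proof.
elim: t => [k|a IHa b IHb|a IHa b IHb|a IHa b IHb|c a IHa|a IHa|] /=.
- by rewrite /polyI big_seq1 /monI /= expr0z mulr1 mulr1; rewrite [1%:~R]/= scale1r.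
- by rewrite polyI_cat IHa IHb.
- by rewrite polyI_cat polyI_neg IHa IHb.
- by rewrite polyI_mul IHa IHb.
- by rewrite polyI_sc IHa cfN_ok.
- by rewrite polyI_neg IHa.
- by rewrite /polyI big_nil.
Qed.

Lemma sumzE (s : seq int) : sumz s = \sum_(a <- s) a.
Proof. by elim: s => [|a s IH] /=; rewrite ?big_nil ?big_cons ?IH. Qed.

Lemma zeroq_gen (K : eqType) (f : K -> A) (s : seq (K * int)) :
  all (fun k => \sum_(m <- s | m.1 == k) m.2 == 0) [seq m.1 | m <- s] ->
  \sum_(m <- s) m.2%:~R *: f m.1 = 0.
Proof.
move: {2}(size s) (leqnn (size s)) => N.
elim: N s => [|N IH] [|m0 s] //=; rewrite ?big_nil // => Hsz /andP [H0 Hall].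
rewrite (bigID (fun m => m.1 == m0.1)) /=.
have -> : \sum_(i <- m0 :: s | i.1 == m0.1) i.2%:~R *: f i.1 =
          (\sum_(i <- m0 :: s | i.1 == m0.1) i.2)%:~R *: f m0.1.
  rewrite (big_morph (fun z : int => z%:~R : Qv) (@intrD Qv) (erefl _)) scaler_suml.
  by apply: eq_bigr => i /eqP ->.
rewrite (eqP H0) scale0r add0r -big_filter.
apply: IH.
  by rewrite size_filter /= eqxx /= add0n; apply: leq_trans (count_size _ _) _.
apply/allP => k /mapP [m]; rewrite mem_filter => /andP [Hm Hin] ->.
have HH : all (fun k => \sum_(m <- m0 :: s | m.1 == k) m.2 == 0) [seq m.1 | m <- m0 :: s].
  by rewrite [X in all _ X]/= /= H0 Hall.
move/allP: HH => /(_ m.1 (map_f _ Hin)).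
rewrite big_filter_cond => H; rewrite (eq_bigl (fun i => i.1 == m.1)) //.
by move=> i /=; apply/andb_idl => /eqP ->.
Qed.

Lemma zeroq_ok s : zeroq s -> polyI s = 0.
Proof.
move=> H; rewrite /polyI.
rewrite (eq_bigr (fun m : mono => m.2%:~R *: (vv ^ m.1.2 *: wordI m.1.1))); last first.
  by move=> m _; rewrite /monI scalerA.
apply: (@zeroq_gen _ (fun k : seq nat * int => vv ^ k.2 *: wordI k.1)).
move: H; rewrite /zeroq; apply: sub_all => k /=.
by rewrite sumzE big_map big_filter.
Qed.

Lemma polyI_hN hyps h : holds hyps -> polyI (hN hyps h) = 0.
Proof.
rewrite /hN; elim: hyps h => [|[a b] hs IH] [|h] /=.
- by rewrite /polyI big_nil.
- by rewrite /polyI big_nil.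
- by move=> [Hab _]; rewrite polyI_cat polyI_neg !tN_ok Hab subrr.
- by move=> [_ Hs]; apply: IH.
Qed.

Lemma cert_ok hyps (s : lp) cert t1 t2 :
  checkC hyps s cert t1 t2 -> holds hyps -> lpI s != 0 -> tI t1 = tI t2.
Proof.
move=> /zeroq_ok H Hh Hs.
have E : polyI (flatten [seq entryN hyps e | e <- cert]) = 0.
  elim: cert {H} => [|e c IH] /=; first by rewrite /polyI big_nil.
  rewrite polyI_cat IH addr0 /entryN polyI_sc !polyI_mul polyI_hN //.
  by rewrite mulr0 mul0r scaler0.
move: H; rewrite polyI_cat polyI_neg E oppr0 addr0 polyI_sc polyI_cat polyI_neg !tN_ok.
by move/eqP; rewrite scaler_eq0 (negbTE Hs) /= subr_eq0 => /eqP.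
Qed.
End Interp.


Definition qc {A : algType Qv} (x y : A) : A := - (x * y) + vv^-1 *: (y * x).
Definition serre {A : algType Qv} (x y : A) : A :=
  x * x * y - (vv + vv^-1) *: (x * y * x) + y * (x * x).

Lemma scale1_nz : lpI [:: (0%Z, 1%Z)] != 0.
Proof. by rewrite /lpI big_seq1 /= expr0z mulr1 oner_eq0. Qed.

Lemma scale2_nz : lpI [:: (0%Z, 1%Z); (2%Z, 1%Z)] != 0.
Proof.
rewrite /lpI !big_cons big_nil /= expr0z !mulr1 mul1r addr0.
have -> : (1 + vv ^ 2%Z : Qv) = FracField.tofrac (1 + 'X^2 : {poly rat}).
  by rewrite rmorphD rmorph1 rmorphXn /vv.
rewrite -(tofrac0 _) tofrac_eq; apply/eqP => /(congr1 (fun p : {poly rat} => p`_2)).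
by rewrite coefD coef1 coefXn /= coef0.
Qed.
Lemma A_R2 (A : algType Qv) (x1 x2 y1 y2 : A) (sxy12 : (serre x1 y2) = 0) :
  (x1 * (qc x1 y2)) = (vv *: ((qc x1 y2) * x1)).
Proof.
exact: (@cert_ok A [:: x1; x2; y1; y2] [:: ((TAdd (TSub (TMul (TMul (TAt 0) (TAt 0)) (TAt 3)) (TSc (CAdd CV CVi) (TMul (TMul (TAt 0) (TAt 3)) (TAt 0)))) (TMul (TAt 3) (TMul (TAt 0) (TAt 0)))), TZero)]
  [:: (0%Z, 1%Z)]
  [:: ([:: (0%Z, (-1)%Z)], [:: ], 0, [:: ])]
  (TMul (TAt 0) (TAdd (TNeg (TMul (TAt 0) (TAt 3))) (TSc CVi (TMul (TAt 3) (TAt 0))))) (TSc CV (TMul (TAdd (TNeg (TMul (TAt 0) (TAt 3))) (TSc CVi (TMul (TAt 3) (TAt 0)))) (TAt 0)))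
  ltac:(vm_compute; reflexivity) (conj sxy12 I) scale1_nz).
Qed.

Lemma A_R4 (A : algType Qv) (x1 x2 y1 y2 : A) (cxy22 : (x2 * y2) = (y2 * x2)) :
  ((qc x1 x2) * y2) = (((vv^-1 *: (y2 * (qc x1 x2))) + ((qc x1 y2) * x2)) - (vv^-1 *: (x2 * (qc x1 y2)))).
Proof.
exact: (@cert_ok A [:: x1; x2; y1; y2] [:: ((TMul (TAt 1) (TAt 3)), (TMul (TAt 3) (TAt 1)))]
  [:: (0%Z, 1%Z)]
  [:: ([:: ((-2)%Z, 1%Z)], [:: ], 0, [:: 0]);
    ([:: (0%Z, (-1)%Z)], [:: 0], 0, [:: ])]
  (TMul (TAdd (TNeg (TMul (TAt 0) (TAt 1))) (TSc CVi (TMul (TAt 1) (TAt 0)))) (TAt 3)) (TSub (TAdd (TSc CVi (TMul (TAt 3) (TAdd (TNeg (TMul (TAt 0) (TAt 1))) (TSc CVi (TMul (TAt 1) (TAt 0)))))) (TMul (TAdd (TNeg (TMul (TAt 0) (TAt 3))) (TSc CVi (TMul (TAt 3) (TAt 0)))) (TAt 1))) (TSc CVi (TMul (TAt 1) (TAdd (TNeg (TMul (TAt 0) (TAt 3))) (TSc CVi (TMul (TAt 3) (TAt 0)))))))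
  ltac:(vm_compute; reflexivity) (conj cxy22 I) scale1_nz).
Qed.

Lemma A_R8 (A : algType Qv) (x1 x2 y1 y2 : A) (cxy22 : (x2 * y2) = (y2 * x2)) :
  (x2 * (qc x1 y2)) = (((vv *: ((qc x1 y2) * x2)) - (vv *: ((qc x1 x2) * y2))) + (y2 * (qc x1 x2))).
Proof.
exact: (@cert_ok A [:: x1; x2; y1; y2] [:: ((TMul (TAt 1) (TAt 3)), (TMul (TAt 3) (TAt 1)))]
  [:: (0%Z, 1%Z)]
  [:: ([:: ((-1)%Z, 1%Z)], [:: ], 0, [:: 0]);
    ([:: (1%Z, (-1)%Z)], [:: 0], 0, [:: ])]
  (TMul (TAt 1) (TAdd (TNeg (TMul (TAt 0) (TAt 3))) (TSc CVi (TMul (TAt 3) (TAt 0))))) (TAdd (TSub (TSc CV (TMul (TAdd (TNeg (TMul (TAt 0) (TAt 3))) (TSc CVi (TMul (TAt 3) (TAt 0)))) (TAt 1))) (TSc CV (TMul (TAdd (TNeg (TMul (TAt 0) (TAt 1))) (TSc CVi (TMul (TAt 1) (TAt 0)))) (TAt 3)))) (TMul (TAt 3) (TAdd (TNeg (TMul (TAt 0) (TAt 1))) (TSc CVi (TMul (TAt 1) (TAt 0))))))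
  ltac:(vm_compute; reflexivity) (conj cxy22 I) scale1_nz).
Qed.

Lemma A_R6b (A : algType Qv) (x1 x2 y1 y2 : A) (cxy11 : (x1 * y1) = (y1 * x1)) (sxy12 : (serre x1 y2) = 0) (g7_1 : ((x1 * y2) - (vv *: (y2 * x1))) = ((y1 * x2) - (vv *: (x2 * y1)))) :
  ((qc x1 x2) * y1) = (vv^-1 *: (y1 * (qc x1 x2))).
Proof.
exact: (@cert_ok A [:: x1; x2; y1; y2] [:: ((TMul (TAt 0) (TAt 2)), (TMul (TAt 2) (TAt 0))); ((TAdd (TSub (TMul (TMul (TAt 0) (TAt 0)) (TAt 3)) (TSc (CAdd CV CVi) (TMul (TMul (TAt 0) (TAt 3)) (TAt 0)))) (TMul (TAt 3) (TMul (TAt 0) (TAt 0)))), TZero); ((TSub (TMul (TAt 0) (TAt 3)) (TSc CV (TMul (TAt 3) (TAt 0)))), (TSub (TMul (TAt 2) (TAt 1)) (TSc CV (TMul (TAt 1) (TAt 2)))))]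
  [:: (0%Z, 1%Z)]
  [:: ([:: ((-1)%Z, (-1)%Z)], [:: ], 0, [:: 1]);
    ([:: ((-1)%Z, 1%Z)], [:: 1], 0, [:: ]);
    ([:: ((-1)%Z, 1%Z)], [:: ], 1, [:: ]);
    ([:: ((-2)%Z, 1%Z)], [:: ], 2, [:: 0]);
    ([:: ((-1)%Z, (-1)%Z)], [:: 0], 2, [:: ])]
  (TMul (TAdd (TNeg (TMul (TAt 0) (TAt 1))) (TSc CVi (TMul (TAt 1) (TAt 0)))) (TAt 2)) (TSc CVi (TMul (TAt 2) (TAdd (TNeg (TMul (TAt 0) (TAt 1))) (TSc CVi (TMul (TAt 1) (TAt 0))))))
  ltac:(vm_compute; reflexivity) (conj cxy11 (conj sxy12 (conj g7_1 I))) scale1_nz).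
Qed.

Lemma A_P2 (A : algType Qv) (x1 x2 y1 y2 : A) (sxx12 : (serre x1 x2) = 0) (sxy12 : (serre x1 y2) = 0) (cxy22 : (x2 * y2) = (y2 * x2)) :
  ((qc x1 x2) * (qc x1 y2)) = ((qc x1 y2) * (qc x1 x2)).
Proof.
exact: (@cert_ok A [:: x1; x2; y1; y2] [:: ((TAdd (TSub (TMul (TMul (TAt 0) (TAt 0)) (TAt 1)) (TSc (CAdd CV CVi) (TMul (TMul (TAt 0) (TAt 1)) (TAt 0)))) (TMul (TAt 1) (TMul (TAt 0) (TAt 0)))), TZero); ((TAdd (TSub (TMul (TMul (TAt 0) (TAt 0)) (TAt 3)) (TSc (CAdd CV CVi) (TMul (TMul (TAt 0) (TAt 3)) (TAt 0)))) (TMul (TAt 3) (TMul (TAt 0) (TAt 0)))), TZero); ((TMul (TAt 1) (TAt 3)), (TMul (TAt 3) (TAt 1)))]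
  [:: (0%Z, 1%Z); (2%Z, 1%Z)]
  [:: ([:: (1%Z, (-1)%Z)], [:: ], 0, [:: 3]);
    ([:: ((-1)%Z, 1%Z)], [:: 3], 0, [:: ]);
    ([:: (1%Z, 1%Z)], [:: ], 1, [:: 1]);
    ([:: ((-1)%Z, (-1)%Z)], [:: 1], 1, [:: ]);
    ([:: ((-1)%Z, 1%Z)], [:: ], 2, [:: 0; 0]);
    ([:: ((-1)%Z, (-1)%Z); (1%Z, (-1)%Z)], [:: 0], 2, [:: 0]);
    ([:: (1%Z, 1%Z)], [:: 0; 0], 2, [:: ])]
  (TMul (TAdd (TNeg (TMul (TAt 0) (TAt 1))) (TSc CVi (TMul (TAt 1) (TAt 0)))) (TAdd (TNeg (TMul (TAt 0) (TAt 3))) (TSc CVi (TMul (TAt 3) (TAt 0))))) (TMul (TAdd (TNeg (TMul (TAt 0) (TAt 3))) (TSc CVi (TMul (TAt 3) (TAt 0)))) (TAdd (TNeg (TMul (TAt 0) (TAt 1))) (TSc CVi (TMul (TAt 1) (TAt 0)))))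
  ltac:(vm_compute; reflexivity) (conj sxx12 (conj sxy12 (conj cxy22 I))) scale2_nz).
Qed.

Lemma A_P3a (A : algType Qv) (x1 x2 x3 y1 y2 y3 : A) (sxx12 : (serre x1 x2) = 0) (cxx13 : (x1 * x3) = (x3 * x1)) (sxx23 : (serre x2 x3) = 0) :
  (serre (qc x1 x2) x3) = 0.
Proof.
exact: (@cert_ok A [:: x1; x2; x3; y1; y2; y3] [:: ((TAdd (TSub (TMul (TMul (TAt 0) (TAt 0)) (TAt 1)) (TSc (CAdd CV CVi) (TMul (TMul (TAt 0) (TAt 1)) (TAt 0)))) (TMul (TAt 1) (TMul (TAt 0) (TAt 0)))), TZero); ((TMul (TAt 0) (TAt 2)), (TMul (TAt 2) (TAt 0))); ((TAdd (TSub (TMul (TMul (TAt 1) (TAt 1)) (TAt 2)) (TSc (CAdd CV CVi) (TMul (TMul (TAt 1) (TAt 2)) (TAt 1)))) (TMul (TAt 2) (TMul (TAt 1) (TAt 1)))), TZero)]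
  [:: (0%Z, 1%Z); (2%Z, 1%Z)]
  [:: ([:: (1%Z, (-1)%Z)], [:: ], 0, [:: 1; 2]);
    ([:: ((-1)%Z, (-1)%Z)], [:: 1], 0, [:: 2]);
    ([:: ((-2)%Z, 1%Z); (0%Z, 1%Z)], [:: 1; 2], 0, [:: ]);
    ([:: (0%Z, 1%Z); (2%Z, 1%Z)], [:: ], 0, [:: 2; 1]);
    ([:: (1%Z, (-1)%Z)], [:: 2], 0, [:: 1]);
    ([:: ((-1)%Z, (-1)%Z)], [:: 2; 1], 0, [:: ]);
    ([:: ((-2)%Z, 1%Z); (0%Z, 1%Z)], [:: 1], 1, [:: 0; 1]);
    ([:: (0%Z, (-1)%Z); (2%Z, (-1)%Z)], [:: 1; 0], 1, [:: 1]);
    ([:: ((-1)%Z, 1%Z); (1%Z, 1%Z)], [:: ], 1, [:: 1; 1; 0]);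
    ([:: ((-3)%Z, (-1)%Z); ((-1)%Z, (-2)%Z); (1%Z, (-1)%Z)], [:: 1], 1, [:: 1; 0]);
    ([:: ((-1)%Z, 1%Z)], [:: 1; 1], 1, [:: 0]);
    ([:: ((-1)%Z, 1%Z)], [:: 1; 1; 0], 1, [:: ]);
    ([:: (1%Z, (-1)%Z)], [:: ], 1, [:: 0; 1; 1]);
    ([:: (1%Z, (-1)%Z)], [:: 0], 1, [:: 1; 1]);
    ([:: ((-1)%Z, 1%Z); (1%Z, 2%Z); (3%Z, 1%Z)], [:: 0; 1], 1, [:: 1]);
    ([:: ((-1)%Z, (-1)%Z); (1%Z, (-1)%Z)], [:: 0; 1; 1], 1, [:: ]);
    ([:: ((-1)%Z, 1%Z)], [:: ], 2, [:: 0; 0]);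
    ([:: ((-1)%Z, (-1)%Z); (1%Z, (-1)%Z)], [:: 0], 2, [:: 0]);
    ([:: (1%Z, 1%Z)], [:: 0; 0], 2, [:: ])]
  (TAdd (TSub (TMul (TMul (TAdd (TNeg (TMul (TAt 0) (TAt 1))) (TSc CVi (TMul (TAt 1) (TAt 0)))) (TAdd (TNeg (TMul (TAt 0) (TAt 1))) (TSc CVi (TMul (TAt 1) (TAt 0))))) (TAt 2)) (TSc (CAdd CV CVi) (TMul (TMul (TAdd (TNeg (TMul (TAt 0) (TAt 1))) (TSc CVi (TMul (TAt 1) (TAt 0)))) (TAt 2)) (TAdd (TNeg (TMul (TAt 0) (TAt 1))) (TSc CVi (TMul (TAt 1) (TAt 0))))))) (TMul (TAt 2) (TMul (TAdd (TNeg (TMul (TAt 0) (TAt 1))) (TSc CVi (TMul (TAt 1) (TAt 0)))) (TAdd (TNeg (TMul (TAt 0) (TAt 1))) (TSc CVi (TMul (TAt 1) (TAt 0))))))) TZero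
  ltac:(vm_compute; reflexivity) (conj sxx12 (conj cxx13 (conj sxx23 I))) scale2_nz).
Qed.

Lemma A_P3b (A : algType Qv) (x1 x2 x3 y1 y2 y3 : A) (cxx13 : (x1 * x3) = (x3 * x1)) (sxx32 : (serre x3 x2) = 0) :
  (serre x3 (qc x1 x2)) = 0.
Proof.
exact: (@cert_ok A [:: x1; x2; x3; y1; y2; y3] [:: ((TMul (TAt 0) (TAt 2)), (TMul (TAt 2) (TAt 0))); ((TAdd (TSub (TMul (TMul (TAt 2) (TAt 2)) (TAt 1)) (TSc (CAdd CV CVi) (TMul (TMul (TAt 2) (TAt 1)) (TAt 2)))) (TMul (TAt 1) (TMul (TAt 2) (TAt 2)))), TZero)]
  [:: (0%Z, 1%Z)]
  [:: ([:: ((-1)%Z, (-1)%Z); (1%Z, (-1)%Z)], [:: ], 0, [:: 1; 2]);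
    ([:: ((-1)%Z, 1%Z)], [:: 1], 0, [:: 2]);
    ([:: ((-1)%Z, 1%Z)], [:: 1; 2], 0, [:: ]);
    ([:: (0%Z, 1%Z)], [:: ], 0, [:: 2; 1]);
    ([:: (0%Z, 1%Z)], [:: 2], 0, [:: 1]);
    ([:: ((-2)%Z, (-1)%Z); (0%Z, (-1)%Z)], [:: 2; 1], 0, [:: ]);
    ([:: ((-1)%Z, 1%Z)], [:: ], 1, [:: 0]);
    ([:: (0%Z, (-1)%Z)], [:: 0], 1, [:: ])]
  (TAdd (TSub (TMul (TMul (TAt 2) (TAt 2)) (TAdd (TNeg (TMul (TAt 0) (TAt 1))) (TSc CVi (TMul (TAt 1) (TAt 0))))) (TSc (CAdd CV CVi) (TMul (TMul (TAt 2) (TAdd (TNeg (TMul (TAt 0) (TAt 1))) (TSc CVi (TMul (TAt 1) (TAt 0))))) (TAt 2)))) (TMul (TAdd (TNeg (TMul (TAt 0) (TAt 1))) (TSc CVi (TMul (TAt 1) (TAt 0)))) (TMul (TAt 2) (TAt 2)))) TZero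
  ltac:(vm_compute; reflexivity) (conj cxx13 (conj sxx32 I)) scale1_nz).
Qed.

Lemma A_P3c (A : algType Qv) (x1 x2 x3 y1 y2 y3 : A) (sxx12 : (serre x1 x2) = 0) (cxx13 : (x1 * x3) = (x3 * x1)) :
  (serre x1 (qc x2 x3)) = 0.
Proof.
exact: (@cert_ok A [:: x1; x2; x3; y1; y2; y3] [:: ((TAdd (TSub (TMul (TMul (TAt 0) (TAt 0)) (TAt 1)) (TSc (CAdd CV CVi) (TMul (TMul (TAt 0) (TAt 1)) (TAt 0)))) (TMul (TAt 1) (TMul (TAt 0) (TAt 0)))), TZero); ((TMul (TAt 0) (TAt 2)), (TMul (TAt 2) (TAt 0)))]
  [:: (0%Z, 1%Z)]
  [:: ([:: (0%Z, (-1)%Z)], [:: ], 0, [:: 2]);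
    ([:: ((-1)%Z, 1%Z)], [:: 2], 0, [:: ]);
    ([:: ((-1)%Z, 1%Z)], [:: ], 1, [:: 0; 1]);
    ([:: ((-1)%Z, 1%Z)], [:: 0], 1, [:: 1]);
    ([:: ((-1)%Z, (-1)%Z); (1%Z, (-1)%Z)], [:: 0; 1], 1, [:: ]);
    ([:: ((-2)%Z, (-1)%Z); (0%Z, (-1)%Z)], [:: ], 1, [:: 1; 0]);
    ([:: (0%Z, 1%Z)], [:: 1], 1, [:: 0]);
    ([:: (0%Z, 1%Z)], [:: 1; 0], 1, [:: ])]
  (TAdd (TSub (TMul (TMul (TAt 0) (TAt 0)) (TAdd (TNeg (TMul (TAt 1) (TAt 2))) (TSc CVi (TMul (TAt 2) (TAt 1))))) (TSc (CAdd CV CVi) (TMul (TMul (TAt 0) (TAdd (TNeg (TMul (TAt 1) (TAt 2))) (TSc CVi (TMul (TAt 2) (TAt 1))))) (TAt 0)))) (TMul (TAdd (TNeg (TMul (TAt 1) (TAt 2))) (TSc CVi (TMul (TAt 2) (TAt 1)))) (TMul (TAt 0) (TAt 0)))) TZero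
  ltac:(vm_compute; reflexivity) (conj sxx12 (conj cxx13 I)) scale1_nz).
Qed.

Lemma A_P3d (A : algType Qv) (x1 x2 x3 y1 y2 y3 : A) (cxx13 : (x1 * x3) = (x3 * x1)) (sxx21 : (serre x2 x1) = 0) (sxx23 : (serre x2 x3) = 0) (sxx32 : (serre x3 x2) = 0) :
  (serre (qc x2 x3) x1) = 0.
Proof.
exact: (@cert_ok A [:: x1; x2; x3; y1; y2; y3] [:: ((TMul (TAt 0) (TAt 2)), (TMul (TAt 2) (TAt 0))); ((TAdd (TSub (TMul (TMul (TAt 1) (TAt 1)) (TAt 0)) (TSc (CAdd CV CVi) (TMul (TMul (TAt 1) (TAt 0)) (TAt 1)))) (TMul (TAt 0) (TMul (TAt 1) (TAt 1)))), TZero); ((TAdd (TSub (TMul (TMul (TAt 1) (TAt 1)) (TAt 2)) (TSc (CAdd CV CVi) (TMul (TMul (TAt 1) (TAt 2)) (TAt 1)))) (TMul (TAt 2) (TMul (TAt 1) (TAt 1)))), TZero); ((TAdd (TSub (TMul (TMul (TAt 2) (TAt 2)) (TAt 1)) (TSc (CAdd CV CVi) (TMul (TMul (TAt 2) (TAt 1)) (TAt 2)))) (TMul (TAt 1) (TMul (TAt 2) (TAt 2)))), TZero)]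
  [:: (0%Z, 1%Z); (2%Z, 1%Z)]
  [:: ([:: (0%Z, (-1)%Z); (2%Z, (-1)%Z)], [:: 1], 0, [:: 2; 1]);
    ([:: ((-2)%Z, 1%Z); (0%Z, 1%Z)], [:: 1; 2], 0, [:: 1]);
    ([:: (0%Z, (-1)%Z); (2%Z, (-1)%Z)], [:: 1; 2; 1], 0, [:: ]);
    ([:: ((-1)%Z, 1%Z)], [:: ], 0, [:: 2; 1; 1]);
    ([:: ((-1)%Z, 1%Z)], [:: 2], 0, [:: 1; 1]);
    ([:: ((-3)%Z, (-1)%Z); ((-1)%Z, (-2)%Z); (1%Z, (-1)%Z)], [:: 2; 1], 0, [:: 1]);
    ([:: ((-1)%Z, 1%Z); (1%Z, 2%Z)], [:: 2; 1; 1], 0, [:: ]);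
    ([:: ((-1)%Z, (-1)%Z); (1%Z, (-1)%Z)], [:: ], 0, [:: 1; 1; 2]);
    ([:: ((-1)%Z, 1%Z); (1%Z, 2%Z); (3%Z, 1%Z)], [:: 1], 0, [:: 1; 2]);
    ([:: (1%Z, (-1)%Z)], [:: 1; 1], 0, [:: 2]);
    ([:: (1%Z, 1%Z)], [:: ], 1, [:: 2; 2]);
    ([:: ((-1)%Z, (-1)%Z); (1%Z, (-1)%Z)], [:: 2], 1, [:: 2]);
    ([:: ((-1)%Z, 1%Z)], [:: 2; 2], 1, [:: ]);
    ([:: (1%Z, (-1)%Z)], [:: ], 2, [:: 0; 2]);
    ([:: (1%Z, (-1)%Z)], [:: 0], 2, [:: 2]);
    ([:: (1%Z, 1%Z)], [:: 0; 2], 2, [:: ]);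
    ([:: (1%Z, 1%Z)], [:: 2], 2, [:: 0]);
    ([:: ((-2)%Z, 1%Z); (0%Z, 1%Z)], [:: ], 3, [:: 0; 1]);
    ([:: ((-1)%Z, (-1)%Z); (1%Z, (-1)%Z)], [:: 0], 3, [:: 1]);
    ([:: ((-1)%Z, (-1)%Z); (1%Z, (-1)%Z)], [:: ], 3, [:: 1; 0]);
    ([:: (0%Z, 1%Z); (2%Z, 1%Z)], [:: 1; 0], 3, [:: ])]
  (TAdd (TSub (TMul (TMul (TAdd (TNeg (TMul (TAt 1) (TAt 2))) (TSc CVi (TMul (TAt 2) (TAt 1)))) (TAdd (TNeg (TMul (TAt 1) (TAt 2))) (TSc CVi (TMul (TAt 2) (TAt 1))))) (TAt 0)) (TSc (CAdd CV CVi) (TMul (TMul (TAdd (TNeg (TMul (TAt 1) (TAt 2))) (TSc CVi (TMul (TAt 2) (TAt 1)))) (TAt 0)) (TAdd (TNeg (TMul (TAt 1) (TAt 2))) (TSc CVi (TMul (TAt 2) (TAt 1))))))) (TMul (TAt 0) (TMul (TAdd (TNeg (TMul (TAt 1) (TAt 2))) (TSc CVi (TMul (TAt 2) (TAt 1)))) (TAdd (TNeg (TMul (TAt 1) (TAt 2))) (TSc CVi (TMul (TAt 2) (TAt 1))))))) TZero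
  ltac:(vm_compute; reflexivity) (conj cxx13 (conj sxx21 (conj sxx23 (conj sxx32 I)))) scale2_nz).
Qed.

Lemma A_P4a (A : algType Qv) (x1 x2 x3 y1 y2 y3 : A) (sxx12 : (serre x1 x2) = 0) (cxy13 : (x1 * y3) = (y3 * x1)) (sxy23 : (serre x2 y3) = 0) :
  (serre (qc x1 x2) y3) = 0.
Proof.
exact: (@cert_ok A [:: x1; x2; x3; y1; y2; y3] [:: ((TAdd (TSub (TMul (TMul (TAt 0) (TAt 0)) (TAt 1)) (TSc (CAdd CV CVi) (TMul (TMul (TAt 0) (TAt 1)) (TAt 0)))) (TMul (TAt 1) (TMul (TAt 0) (TAt 0)))), TZero); ((TMul (TAt 0) (TAt 5)), (TMul (TAt 5) (TAt 0))); ((TAdd (TSub (TMul (TMul (TAt 1) (TAt 1)) (TAt 5)) (TSc (CAdd CV CVi) (TMul (TMul (TAt 1) (TAt 5)) (TAt 1)))) (TMul (TAt 5) (TMul (TAt 1) (TAt 1)))), TZero)]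
  [:: (0%Z, 1%Z); (2%Z, 1%Z)]
  [:: ([:: (0%Z, 1%Z); (2%Z, 1%Z)], [:: ], 0, [:: 5; 1]);
    ([:: (1%Z, (-1)%Z)], [:: 5], 0, [:: 1]);
    ([:: ((-1)%Z, (-1)%Z)], [:: 5; 1], 0, [:: ]);
    ([:: (1%Z, (-1)%Z)], [:: ], 0, [:: 1; 5]);
    ([:: ((-1)%Z, (-1)%Z)], [:: 1], 0, [:: 5]);
    ([:: ((-2)%Z, 1%Z); (0%Z, 1%Z)], [:: 1; 5], 0, [:: ]);
    ([:: ((-2)%Z, 1%Z); (0%Z, 1%Z)], [:: 1], 1, [:: 0; 1]);
    ([:: (0%Z, (-1)%Z); (2%Z, (-1)%Z)], [:: 1; 0], 1, [:: 1]);
    ([:: ((-1)%Z, 1%Z); (1%Z, 1%Z)], [:: ], 1, [:: 1; 1; 0]);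
    ([:: ((-3)%Z, (-1)%Z); ((-1)%Z, (-2)%Z); (1%Z, (-1)%Z)], [:: 1], 1, [:: 1; 0]);
    ([:: ((-1)%Z, 1%Z)], [:: 1; 1], 1, [:: 0]);
    ([:: ((-1)%Z, 1%Z)], [:: 1; 1; 0], 1, [:: ]);
    ([:: (1%Z, (-1)%Z)], [:: ], 1, [:: 0; 1; 1]);
    ([:: (1%Z, (-1)%Z)], [:: 0], 1, [:: 1; 1]);
    ([:: ((-1)%Z, 1%Z); (1%Z, 2%Z); (3%Z, 1%Z)], [:: 0; 1], 1, [:: 1]);
    ([:: ((-1)%Z, (-1)%Z); (1%Z, (-1)%Z)], [:: 0; 1; 1], 1, [:: ]);
    ([:: ((-1)%Z, 1%Z)], [:: ], 2, [:: 0; 0]);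
    ([:: ((-1)%Z, (-1)%Z); (1%Z, (-1)%Z)], [:: 0], 2, [:: 0]);
    ([:: (1%Z, 1%Z)], [:: 0; 0], 2, [:: ])]
  (TAdd (TSub (TMul (TMul (TAdd (TNeg (TMul (TAt 0) (TAt 1))) (TSc CVi (TMul (TAt 1) (TAt 0)))) (TAdd (TNeg (TMul (TAt 0) (TAt 1))) (TSc CVi (TMul (TAt 1) (TAt 0))))) (TAt 5)) (TSc (CAdd CV CVi) (TMul (TMul (TAdd (TNeg (TMul (TAt 0) (TAt 1))) (TSc CVi (TMul (TAt 1) (TAt 0)))) (TAt 5)) (TAdd (TNeg (TMul (TAt 0) (TAt 1))) (TSc CVi (TMul (TAt 1) (TAt 0))))))) (TMul (TAt 5) (TMul (TAdd (TNeg (TMul (TAt 0) (TAt 1))) (TSc CVi (TMul (TAt 1) (TAt 0)))) (TAdd (TNeg (TMul (TAt 0) (TAt 1))) (TSc CVi (TMul (TAt 1) (TAt 0))))))) TZero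
  ltac:(vm_compute; reflexivity) (conj sxx12 (conj cxy13 (conj sxy23 I))) scale2_nz).
Qed.

Lemma A_P4b (A : algType Qv) (x1 x2 x3 y1 y2 y3 : A) (sxx12 : (serre x1 x2) = 0) (cxy13 : (x1 * y3) = (y3 * x1)) :
  (serre x1 (qc x2 y3)) = 0.
Proof.
exact: (@cert_ok A [:: x1; x2; x3; y1; y2; y3] [:: ((TAdd (TSub (TMul (TMul (TAt 0) (TAt 0)) (TAt 1)) (TSc (CAdd CV CVi) (TMul (TMul (TAt 0) (TAt 1)) (TAt 0)))) (TMul (TAt 1) (TMul (TAt 0) (TAt 0)))), TZero); ((TMul (TAt 0) (TAt 5)), (TMul (TAt 5) (TAt 0)))]
  [:: (0%Z, 1%Z)]
  [:: ([:: (0%Z, (-1)%Z)], [:: ], 0, [:: 5]);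
    ([:: ((-1)%Z, 1%Z)], [:: 5], 0, [:: ]);
    ([:: ((-1)%Z, 1%Z)], [:: ], 1, [:: 0; 1]);
    ([:: ((-1)%Z, 1%Z)], [:: 0], 1, [:: 1]);
    ([:: ((-1)%Z, (-1)%Z); (1%Z, (-1)%Z)], [:: 0; 1], 1, [:: ]);
    ([:: ((-2)%Z, (-1)%Z); (0%Z, (-1)%Z)], [:: ], 1, [:: 1; 0]);
    ([:: (0%Z, 1%Z)], [:: 1], 1, [:: 0]);
    ([:: (0%Z, 1%Z)], [:: 1; 0], 1, [:: ])]
  (TAdd (TSub (TMul (TMul (TAt 0) (TAt 0)) (TAdd (TNeg (TMul (TAt 1) (TAt 5))) (TSc CVi (TMul (TAt 5) (TAt 1))))) (TSc (CAdd CV CVi) (TMul (TMul (TAt 0) (TAdd (TNeg (TMul (TAt 1) (TAt 5))) (TSc CVi (TMul (TAt 5) (TAt 1))))) (TAt 0)))) (TMul (TAdd (TNeg (TMul (TAt 1) (TAt 5))) (TSc CVi (TMul (TAt 5) (TAt 1)))) (TMul (TAt 0) (TAt 0)))) TZero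
  ltac:(vm_compute; reflexivity) (conj sxx12 (conj cxy13 I)) scale1_nz).
Qed.

Lemma A_P4c (A : algType Qv) (x1 x2 x3 y1 y2 y3 : A) (cxx13 : (x1 * x3) = (x3 * x1)) (sxy32 : (serre x3 y2) = 0) :
  (serre x3 (qc x1 y2)) = 0.
Proof.
exact: (@cert_ok A [:: x1; x2; x3; y1; y2; y3] [:: ((TMul (TAt 0) (TAt 2)), (TMul (TAt 2) (TAt 0))); ((TAdd (TSub (TMul (TMul (TAt 2) (TAt 2)) (TAt 4)) (TSc (CAdd CV CVi) (TMul (TMul (TAt 2) (TAt 4)) (TAt 2)))) (TMul (TAt 4) (TMul (TAt 2) (TAt 2)))), TZero)]
  [:: (0%Z, 1%Z)]
  [:: ([:: (0%Z, 1%Z)], [:: ], 0, [:: 2; 4]);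
    ([:: (0%Z, 1%Z)], [:: 2], 0, [:: 4]);
    ([:: ((-2)%Z, (-1)%Z); (0%Z, (-1)%Z)], [:: 2; 4], 0, [:: ]);
    ([:: ((-1)%Z, (-1)%Z); (1%Z, (-1)%Z)], [:: ], 0, [:: 4; 2]);
    ([:: ((-1)%Z, 1%Z)], [:: 4], 0, [:: 2]);
    ([:: ((-1)%Z, 1%Z)], [:: 4; 2], 0, [:: ]);
    ([:: ((-1)%Z, 1%Z)], [:: ], 1, [:: 0]);
    ([:: (0%Z, (-1)%Z)], [:: 0], 1, [:: ])]
  (TAdd (TSub (TMul (TMul (TAt 2) (TAt 2)) (TAdd (TNeg (TMul (TAt 0) (TAt 4))) (TSc CVi (TMul (TAt 4) (TAt 0))))) (TSc (CAdd CV CVi) (TMul (TMul (TAt 2) (TAdd (TNeg (TMul (TAt 0) (TAt 4))) (TSc CVi (TMul (TAt 4) (TAt 0))))) (TAt 2)))) (TMul (TAdd (TNeg (TMul (TAt 0) (TAt 4))) (TSc CVi (TMul (TAt 4) (TAt 0)))) (TMul (TAt 2) (TAt 2)))) TZero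
  ltac:(vm_compute; reflexivity) (conj cxx13 (conj sxy32 I)) scale1_nz).
Qed.

Lemma A_P4d (A : algType Qv) (x1 x2 x3 y1 y2 y3 : A) (sxy21 : (serre x2 y1) = 0) (sxx23 : (serre x2 x3) = 0) (cxy31 : (x3 * y1) = (y1 * x3)) (sxx32 : (serre x3 x2) = 0) :
  (serre (qc x2 x3) y1) = 0.
Proof.
exact: (@cert_ok A [:: x1; x2; x3; y1; y2; y3] [:: ((TAdd (TSub (TMul (TMul (TAt 1) (TAt 1)) (TAt 3)) (TSc (CAdd CV CVi) (TMul (TMul (TAt 1) (TAt 3)) (TAt 1)))) (TMul (TAt 3) (TMul (TAt 1) (TAt 1)))), TZero); ((TAdd (TSub (TMul (TMul (TAt 1) (TAt 1)) (TAt 2)) (TSc (CAdd CV CVi) (TMul (TMul (TAt 1) (TAt 2)) (TAt 1)))) (TMul (TAt 2) (TMul (TAt 1) (TAt 1)))), TZero); ((TMul (TAt 2) (TAt 3)), (TMul (TAt 3) (TAt 2))); ((TAdd (TSub (TMul (TMul (TAt 2) (TAt 2)) (TAt 1)) (TSc (CAdd CV CVi) (TMul (TMul (TAt 2) (TAt 1)) (TAt 2)))) (TMul (TAt 1) (TMul (TAt 2) (TAt 2)))), TZero)]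
  [:: (0%Z, 1%Z); (2%Z, 1%Z)]
  [:: ([:: (1%Z, 1%Z)], [:: ], 0, [:: 2; 2]);
    ([:: ((-1)%Z, (-1)%Z); (1%Z, (-1)%Z)], [:: 2], 0, [:: 2]);
    ([:: ((-1)%Z, 1%Z)], [:: 2; 2], 0, [:: ]);
    ([:: (1%Z, 1%Z)], [:: 2], 1, [:: 3]);
    ([:: ((-1)%Z, 1%Z); (1%Z, 1%Z)], [:: 2; 3], 1, [:: ]);
    ([:: (1%Z, (-1)%Z)], [:: ], 1, [:: 3; 2]);
    ([:: (1%Z, (-1)%Z)], [:: 3], 1, [:: 2]);
    ([:: ((-1)%Z, (-1)%Z)], [:: 3; 2], 1, [:: ]);
    ([:: ((-2)%Z, 1%Z); (0%Z, 2%Z); (2%Z, 1%Z)], [:: ], 2, [:: 1; 2; 1]);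
    ([:: (0%Z, 1%Z); (2%Z, 1%Z)], [:: 1], 2, [:: 2; 1]);
    ([:: ((-2)%Z, (-1)%Z); (0%Z, (-1)%Z)], [:: 1; 2], 2, [:: 1]);
    ([:: (0%Z, 1%Z); (2%Z, 1%Z)], [:: 1; 2; 1], 2, [:: ]);
    ([:: ((-1)%Z, (-2)%Z); (1%Z, (-1)%Z)], [:: ], 2, [:: 2; 1; 1]);
    ([:: ((-1)%Z, (-1)%Z)], [:: 2], 2, [:: 1; 1]);
    ([:: ((-3)%Z, 1%Z); ((-1)%Z, 2%Z); (1%Z, 1%Z)], [:: 2; 1], 2, [:: 1]);
    ([:: ((-1)%Z, (-1)%Z); (1%Z, (-2)%Z)], [:: 2; 1; 1], 2, [:: ]);
    ([:: ((-1)%Z, (-1)%Z); (1%Z, (-2)%Z); (3%Z, (-1)%Z)], [:: 1], 2, [:: 1; 2]);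
    ([:: (1%Z, 1%Z)], [:: 1; 1], 2, [:: 2]);
    ([:: ((-2)%Z, 1%Z); (0%Z, 1%Z)], [:: ], 3, [:: 3; 1]);
    ([:: ((-1)%Z, (-1)%Z); (1%Z, (-1)%Z)], [:: 3], 3, [:: 1]);
    ([:: ((-1)%Z, (-1)%Z); (1%Z, (-1)%Z)], [:: ], 3, [:: 1; 3]);
    ([:: (0%Z, 1%Z); (2%Z, 1%Z)], [:: 1; 3], 3, [:: ])]
  (TAdd (TSub (TMul (TMul (TAdd (TNeg (TMul (TAt 1) (TAt 2))) (TSc CVi (TMul (TAt 2) (TAt 1)))) (TAdd (TNeg (TMul (TAt 1) (TAt 2))) (TSc CVi (TMul (TAt 2) (TAt 1))))) (TAt 3)) (TSc (CAdd CV CVi) (TMul (TMul (TAdd (TNeg (TMul (TAt 1) (TAt 2))) (TSc CVi (TMul (TAt 2) (TAt 1)))) (TAt 3)) (TAdd (TNeg (TMul (TAt 1) (TAt 2))) (TSc CVi (TMul (TAt 2) (TAt 1))))))) (TMul (TAt 3) (TMul (TAdd (TNeg (TMul (TAt 1) (TAt 2))) (TSc CVi (TMul (TAt 2) (TAt 1)))) (TAdd (TNeg (TMul (TAt 1) (TAt 2))) (TSc CVi (TMul (TAt 2) (TAt 1))))))) TZero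
  ltac:(vm_compute; reflexivity) (conj sxy21 (conj sxx23 (conj cxy31 (conj sxx32 I)))) scale2_nz).
Qed.

Lemma A_P5a (A : algType Qv) (x1 x2 x3 y1 y2 y3 : A) (cxx13 : (x1 * x3) = (x3 * x1)) (cxy13 : (x1 * y3) = (y3 * x1)) (g7_2 : ((x2 * y3) - (vv *: (y3 * x2))) = ((y2 * x3) - (vv *: (x3 * y2)))) :
  (((qc x1 x2) * y3) - (vv *: (y3 * (qc x1 x2)))) = (((qc x1 y2) * x3) - (vv *: (x3 * (qc x1 y2)))).
Proof.
exact: (@cert_ok A [:: x1; x2; x3; y1; y2; y3] [:: ((TMul (TAt 0) (TAt 2)), (TMul (TAt 2) (TAt 0))); ((TMul (TAt 0) (TAt 5)), (TMul (TAt 5) (TAt 0))); ((TSub (TMul (TAt 1) (TAt 5)) (TSc CV (TMul (TAt 5) (TAt 1)))), (TSub (TMul (TAt 4) (TAt 2)) (TSc CV (TMul (TAt 2) (TAt 4)))))]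
  [:: (0%Z, 1%Z)]
  [:: ([:: (1%Z, 1%Z)], [:: ], 0, [:: 4]);
    ([:: ((-1)%Z, (-1)%Z)], [:: 4], 0, [:: ]);
    ([:: (1%Z, (-1)%Z)], [:: ], 1, [:: 1]);
    ([:: ((-1)%Z, 1%Z)], [:: 1], 1, [:: ]);
    ([:: ((-1)%Z, 1%Z)], [:: ], 2, [:: 0]);
    ([:: (0%Z, (-1)%Z)], [:: 0], 2, [:: ])]
  (TSub (TMul (TAdd (TNeg (TMul (TAt 0) (TAt 1))) (TSc CVi (TMul (TAt 1) (TAt 0)))) (TAt 5)) (TSc CV (TMul (TAt 5) (TAdd (TNeg (TMul (TAt 0) (TAt 1))) (TSc CVi (TMul (TAt 1) (TAt 0))))))) (TSub (TMul (TAdd (TNeg (TMul (TAt 0) (TAt 4))) (TSc CVi (TMul (TAt 4) (TAt 0)))) (TAt 2)) (TSc CV (TMul (TAt 2) (TAdd (TNeg (TMul (TAt 0) (TAt 4))) (TSc CVi (TMul (TAt 4) (TAt 0)))))))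
  ltac:(vm_compute; reflexivity) (conj cxx13 (conj cxy13 (conj g7_2 I))) scale1_nz).
Qed.

Lemma A_inE (A : algType Qv) (x1 x2 x3 y1 y2 y3 : A) (cxx13 : (x1 * x3) = (x3 * x1)) (sxx21 : (serre x2 x1) = 0) (sxx23 : (serre x2 x3) = 0) :
  ((qc (qc x1 x2) x3) * x2) = (x2 * (qc (qc x1 x2) x3)).
Proof.
exact: (@cert_ok A [:: x1; x2; x3; y1; y2; y3] [:: ((TMul (TAt 0) (TAt 2)), (TMul (TAt 2) (TAt 0))); ((TAdd (TSub (TMul (TMul (TAt 1) (TAt 1)) (TAt 0)) (TSc (CAdd CV CVi) (TMul (TMul (TAt 1) (TAt 0)) (TAt 1)))) (TMul (TAt 0) (TMul (TAt 1) (TAt 1)))), TZero); ((TAdd (TSub (TMul (TMul (TAt 1) (TAt 1)) (TAt 2)) (TSc (CAdd CV CVi) (TMul (TMul (TAt 1) (TAt 2)) (TAt 1)))) (TMul (TAt 2) (TMul (TAt 1) (TAt 1)))), TZero)]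
  [:: (0%Z, 1%Z); (2%Z, 1%Z)]
  [:: ([:: (1%Z, 1%Z)], [:: ], 0, [:: 1; 1]);
    ([:: ((-1)%Z, (-1)%Z); (1%Z, (-1)%Z)], [:: 1], 0, [:: 1]);
    ([:: ((-1)%Z, 1%Z)], [:: 1; 1], 0, [:: ]);
    ([:: (1%Z, 1%Z)], [:: ], 1, [:: 2]);
    ([:: ((-1)%Z, (-1)%Z)], [:: 2], 1, [:: ]);
    ([:: ((-1)%Z, 1%Z)], [:: ], 2, [:: 0]);
    ([:: (1%Z, (-1)%Z)], [:: 0], 2, [:: ])]
  (TMul (TAdd (TNeg (TMul (TAdd (TNeg (TMul (TAt 0) (TAt 1))) (TSc CVi (TMul (TAt 1) (TAt 0)))) (TAt 2))) (TSc CVi (TMul (TAt 2) (TAdd (TNeg (TMul (TAt 0) (TAt 1))) (TSc CVi (TMul (TAt 1) (TAt 0))))))) (TAt 1)) (TMul (TAt 1) (TAdd (TNeg (TMul (TAdd (TNeg (TMul (TAt 0) (TAt 1))) (TSc CVi (TMul (TAt 1) (TAt 0)))) (TAt 2))) (TSc CVi (TMul (TAt 2) (TAdd (TNeg (TMul (TAt 0) (TAt 1))) (TSc CVi (TMul (TAt 1) (TAt 0))))))))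
  ltac:(vm_compute; reflexivity) (conj cxx13 (conj sxx21 (conj sxx23 I))) scale2_nz).
Qed.

Lemma A_inF (A : algType Qv) (x1 x2 x3 y1 y2 y3 : A) (cxx13 : (x1 * x3) = (x3 * x1)) (cxy13 : (x1 * y3) = (y3 * x1)) (g7_1 : ((x1 * y2) - (vv *: (y2 * x1))) = ((y1 * x2) - (vv *: (x2 * y1)))) (sxx21 : (serre x2 x1) = 0) (sxy21 : (serre x2 y1) = 0) (cxy22 : (x2 * y2) = (y2 * x2)) (sxy23 : (serre x2 y3) = 0) (g7_2 : ((x2 * y3) - (vv *: (y3 * x2))) = ((y2 * x3) - (vv *: (x3 * y2)))) :
  ((qc (qc x1 x2) x3) * y2) = (y2 * (qc (qc x1 x2) x3)).
Proof.
exact: (@cert_ok A [:: x1; x2; x3; y1; y2; y3] [:: ((TMul (TAt 0) (TAt 2)), (TMul (TAt 2) (TAt 0))); ((TMul (TAt 0) (TAt 5)), (TMul (TAt 5) (TAt 0))); ((TSub (TMul (TAt 0) (TAt 4)) (TSc CV (TMul (TAt 4) (TAt 0)))), (TSub (TMul (TAt 3) (TAt 1)) (TSc CV (TMul (TAt 1) (TAt 3))))); ((TAdd (TSub (TMul (TMul (TAt 1) (TAt 1)) (TAt 0)) (TSc (CAdd CV CVi) (TMul (TMul (TAt 1) (TAt 0)) (TAt 1)))) (TMul (TAt 0) (TMul (TAt 1) (TAt 1)))), TZero); ((TAdd (TSub (TMul (TMul (TAt 1) (TAt 1)) (TAt 3)) (TSc (CAdd CV CVi) (TMul (TMul (TAt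 1) (TAt 3)) (TAt 1)))) (TMul (TAt 3) (TMul (TAt 1) (TAt 1)))), TZero); ((TMul (TAt 1) (TAt 4)), (TMul (TAt 4) (TAt 1))); ((TAdd (TSub (TMul (TMul (TAt 1) (TAt 1)) (TAt 5)) (TSc (CAdd CV CVi) (TMul (TMul (TAt 1) (TAt 5)) (TAt 1)))) (TMul (TAt 5) (TMul (TAt 1) (TAt 1)))), TZero); ((TSub (TMul (TAt 1) (TAt 5)) (TSc CV (TMul (TAt 5) (TAt 1)))), (TSub (TMul (TAt 4) (TAt 2)) (TSc CV (TMul (TAt 2) (TAt 4)))))]
  [:: (0%Z, 1%Z); (2%Z, 1%Z)]
  [:: ([:: ((-1)%Z, (-1)%Z); (1%Z, (-1)%Z)], [:: ], 0, [:: 4; 1]);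
    ([:: ((-1)%Z, 1%Z); (1%Z, 1%Z)], [:: ], 0, [:: 1; 4]);
    ([:: (1%Z, 1%Z)], [:: ], 1, [:: 1; 1]);
    ([:: ((-1)%Z, (-1)%Z); (1%Z, (-1)%Z)], [:: 1], 1, [:: 1]);
    ([:: ((-1)%Z, 1%Z)], [:: 1; 1], 1, [:: ]);
    ([:: ((-1)%Z, 1%Z); (1%Z, 1%Z)], [:: ], 2, [:: 1; 2]);
    ([:: ((-2)%Z, (-1)%Z); (0%Z, (-1)%Z)], [:: 1], 2, [:: 2]);
    ([:: ((-1)%Z, (-1)%Z); (1%Z, (-1)%Z)], [:: 2], 2, [:: 1]);
    ([:: ((-2)%Z, 1%Z); (0%Z, 1%Z)], [:: 2; 1], 2, [:: ]);
    ([:: ((-1)%Z, (-1)%Z)], [:: ], 3, [:: 5]);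
    ([:: (1%Z, 1%Z)], [:: 5], 3, [:: ]);
    ([:: ((-1)%Z, 1%Z); (1%Z, 1%Z)], [:: ], 4, [:: 2]);
    ([:: ((-1)%Z, (-1)%Z); (1%Z, (-1)%Z)], [:: 2], 4, [:: ]);
    ([:: ((-1)%Z, (-1)%Z); (1%Z, (-1)%Z)], [:: ], 5, [:: 0; 2]);
    ([:: ((-1)%Z, 1%Z); (1%Z, 1%Z)], [:: 0], 5, [:: 2]);
    ([:: ((-1)%Z, (-1)%Z); (1%Z, (-1)%Z)], [:: 0; 2], 5, [:: ]);
    ([:: ((-1)%Z, 1%Z); (1%Z, 1%Z)], [:: 2], 5, [:: 0]);
    ([:: ((-1)%Z, 1%Z)], [:: ], 6, [:: 0]);
    ([:: (1%Z, (-1)%Z)], [:: 0], 6, [:: ]);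
    ([:: ((-1)%Z, (-1)%Z); (1%Z, (-1)%Z)], [:: ], 7, [:: 0; 1]);
    ([:: ((-1)%Z, 1%Z); (1%Z, 1%Z)], [:: 0; 1], 7, [:: ]);
    ([:: ((-2)%Z, 1%Z); (0%Z, 1%Z)], [:: ], 7, [:: 1; 0]);
    ([:: ((-2)%Z, (-1)%Z); (0%Z, (-1)%Z)], [:: 1; 0], 7, [:: ])]
  (TMul (TAdd (TNeg (TMul (TAdd (TNeg (TMul (TAt 0) (TAt 1))) (TSc CVi (TMul (TAt 1) (TAt 0)))) (TAt 2))) (TSc CVi (TMul (TAt 2) (TAdd (TNeg (TMul (TAt 0) (TAt 1))) (TSc CVi (TMul (TAt 1) (TAt 0))))))) (TAt 4)) (TMul (TAt 4) (TAdd (TNeg (TMul (TAdd (TNeg (TMul (TAt 0) (TAt 1))) (TSc CVi (TMul (TAt 1) (TAt 0)))) (TAt 2))) (TSc CVi (TMul (TAt 2) (TAdd (TNeg (TMul (TAt 0) (TAt 1))) (TSc CVi (TMul (TAt 1) (TAt 0))))))))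
  ltac:(vm_compute; reflexivity) (conj cxx13 (conj cxy13 (conj g7_1 (conj sxx21 (conj sxy21 (conj cxy22 (conj sxy23 (conj g7_2 I)))))))) scale2_nz).
Qed.

Lemma A_R0e (A : algType Qv) (x1 x2 x3 y1 y2 y3 : A) (cxy13 : (x1 * y3) = (y3 * x1)) (sxx21 : (serre x2 x1) = 0) (sxy23 : (serre x2 y3) = 0) :
  (x2 * (qc (qc x1 x2) y3)) = ((qc (qc x1 x2) y3) * x2).
Proof.
exact: (@cert_ok A [:: x1; x2; x3; y1; y2; y3] [:: ((TMul (TAt 0) (TAt 5)), (TMul (TAt 5) (TAt 0))); ((TAdd (TSub (TMul (TMul (TAt 1) (TAt 1)) (TAt 0)) (TSc (CAdd CV CVi) (TMul (TMul (TAt 1) (TAt 0)) (TAt 1)))) (TMul (TAt 0) (TMul (TAt 1) (TAt 1)))), TZero); ((TAdd (TSub (TMul (TMul (TAt 1) (TAt 1)) (TAt 5)) (TSc (CAdd CV CVi) (TMul (TMul (TAt 1) (TAt 5)) (TAt 1)))) (TMul (TAt 5) (TMul (TAt 1) (TAt 1)))), TZero)]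
  [:: (0%Z, 1%Z); (2%Z, 1%Z)]
  [:: ([:: (1%Z, (-1)%Z)], [:: ], 0, [:: 1; 1]);
    ([:: ((-1)%Z, 1%Z); (1%Z, 1%Z)], [:: 1], 0, [:: 1]);
    ([:: ((-1)%Z, (-1)%Z)], [:: 1; 1], 0, [:: ]);
    ([:: (1%Z, (-1)%Z)], [:: ], 1, [:: 5]);
    ([:: ((-1)%Z, 1%Z)], [:: 5], 1, [:: ]);
    ([:: ((-1)%Z, (-1)%Z)], [:: ], 2, [:: 0]);
    ([:: (1%Z, 1%Z)], [:: 0], 2, [:: ])]
  (TMul (TAt 1) (TAdd (TNeg (TMul (TAdd (TNeg (TMul (TAt 0) (TAt 1))) (TSc CVi (TMul (TAt 1) (TAt 0)))) (TAt 5))) (TSc CVi (TMul (TAt 5) (TAdd (TNeg (TMul (TAt 0) (TAt 1))) (TSc CVi (TMul (TAt 1) (TAt 0)))))))) (TMul (TAdd (TNeg (TMul (TAdd (TNeg (TMul (TAt 0) (TAt 1))) (TSc CVi (TMul (TAt 1) (TAt 0)))) (TAt 5))) (TSc CVi (TMul (TAt 5) (TAdd (TNeg (TMul (TAt 0) (TAt 1))) (TSc CVi (TMul (TAt 1) (TAt 0))))))) (TAt 1))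
  ltac:(vm_compute; reflexivity) (conj cxy13 (conj sxx21 (conj sxy23 I))) scale2_nz).
Qed.

Lemma A_R3 (A : algType Qv) (x1 x2 x3 y1 y2 y3 : A) (cxy13 : (x1 * y3) = (y3 * x1)) (sxx21 : (serre x2 x1) = 0) (sxy23 : (serre x2 y3) = 0) :
  ((qc x1 x2) * (qc x2 y3)) = (((qc x2 y3) * (qc x1 x2)) + ((vv - vv^-1) *: (x2 * (qc (qc x1 x2) y3)))).
Proof.
exact: (@cert_ok A [:: x1; x2; x3; y1; y2; y3] [:: ((TMul (TAt 0) (TAt 5)), (TMul (TAt 5) (TAt 0))); ((TAdd (TSub (TMul (TMul (TAt 1) (TAt 1)) (TAt 0)) (TSc (CAdd CV CVi) (TMul (TMul (TAt 1) (TAt 0)) (TAt 1)))) (TMul (TAt 0) (TMul (TAt 1) (TAt 1)))), TZero); ((TAdd (TSub (TMul (TMul (TAt 1) (TAt 1)) (TAt 5)) (TSc (CAdd CV CVi) (TMul (TMul (TAt 1) (TAt 5)) (TAt 1)))) (TMul (TAt 5) (TMul (TAt 1) (TAt 1)))), TZero)]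
  [:: (0%Z, 1%Z); (2%Z, 1%Z)]
  [:: ([:: (0%Z, (-1)%Z)], [:: ], 0, [:: 1; 1]);
    ([:: ((-2)%Z, 1%Z); (0%Z, 1%Z)], [:: 1], 0, [:: 1]);
    ([:: ((-2)%Z, (-1)%Z)], [:: 1; 1], 0, [:: ]);
    ([:: (2%Z, 1%Z)], [:: ], 1, [:: 5]);
    ([:: (0%Z, (-1)%Z)], [:: 5], 1, [:: ]);
    ([:: ((-2)%Z, (-1)%Z)], [:: ], 2, [:: 0]);
    ([:: (0%Z, 1%Z)], [:: 0], 2, [:: ])]
  (TMul (TAdd (TNeg (TMul (TAt 0) (TAt 1))) (TSc CVi (TMul (TAt 1) (TAt 0)))) (TAdd (TNeg (TMul (TAt 1) (TAt 5))) (TSc CVi (TMul (TAt 5) (TAt 1))))) (TAdd (TMul (TAdd (TNeg (TMul (TAt 1) (TAt 5))) (TSc CVi (TMul (TAt 5) (TAt 1)))) (TAdd (TNeg (TMul (TAt 0) (TAt 1))) (TSc CVi (TMul (TAt 1) (TAt 0))))) (TSc (CAdd CV (CNeg CVi)) (TMul (TAt 1) (TAdd (TNeg (TMul (TAdd (TNeg (TMul (TAt 0) (TAt 1))) (TSc CVi (TMul (TAt 1) (TAt 0)))) (TAt 5))) (TSc CVi (TMul (TAt 5) (TAdd (TNeg (TMul (TAt 0) (TAt 1))) (TSc CVi (TMul (TAt 1) (TAt 0))))))))))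
  ltac:(vm_compute; reflexivity) (conj cxy13 (conj sxx21 (conj sxy23 I))) scale2_nz).
Qed.

Lemma A_R5 (A : algType Qv) (x1 x2 x3 y1 y2 y3 : A) (cxx13 : (x1 * x3) = (x3 * x1)) (g7_1 : ((x1 * y2) - (vv *: (y2 * x1))) = ((y1 * x2) - (vv *: (x2 * y1)))) (cxy31 : (x3 * y1) = (y1 * x3)) :
  ((qc x2 x3) * y1) = (((vv^-1 *: (y1 * (qc x2 x3))) - (((y2 * x3) - (vv^-1 *: (x3 * y2))) * x1)) + (vv^-1 *: (x1 * ((y2 * x3) - (vv^-1 *: (x3 * y2)))))).
Proof.
exact: (@cert_ok A [:: x1; x2; x3; y1; y2; y3] [:: ((TMul (TAt 0) (TAt 2)), (TMul (TAt 2) (TAt 0))); ((TSub (TMul (TAt 0) (TAt 4)) (TSc CV (TMul (TAt 4) (TAt 0)))), (TSub (TMul (TAt 3) (TAt 1)) (TSc CV (TMul (TAt 1) (TAt 3))))); ((TMul (TAt 2) (TAt 3)), (TMul (TAt 3) (TAt 2)))]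
  [:: (0%Z, 1%Z)]
  [:: ([:: ((-2)%Z, 1%Z)], [:: ], 0, [:: 4]);
    ([:: (0%Z, (-1)%Z)], [:: 4], 0, [:: ]);
    ([:: ((-1)%Z, (-1)%Z)], [:: ], 1, [:: 2]);
    ([:: ((-2)%Z, 1%Z)], [:: 2], 1, [:: ]);
    ([:: ((-2)%Z, 1%Z)], [:: ], 2, [:: 1]);
    ([:: (0%Z, (-1)%Z)], [:: 1], 2, [:: ])]
  (TMul (TAdd (TNeg (TMul (TAt 1) (TAt 2))) (TSc CVi (TMul (TAt 2) (TAt 1)))) (TAt 3)) (TAdd (TSub (TSc CVi (TMul (TAt 3) (TAdd (TNeg (TMul (TAt 1) (TAt 2))) (TSc CVi (TMul (TAt 2) (TAt 1)))))) (TMul (TSub (TMul (TAt 4) (TAt 2)) (TSc CVi (TMul (TAt 2) (TAt 4)))) (TAt 0))) (TSc CVi (TMul (TAt 0) (TSub (TMul (TAt 4) (TAt 2)) (TSc CVi (TMul (TAt 2) (TAt 4)))))))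
  ltac:(vm_compute; reflexivity) (conj cxx13 (conj g7_1 (conj cxy31 I))) scale1_nz).
Qed.

Lemma A_R7b (A : algType Qv) (x1 x2 x3 y1 y2 y3 : A) (cxx13 : (x1 * x3) = (x3 * x1)) (cxy22 : (x2 * y2) = (y2 * x2)) (sxy23 : (serre x2 y3) = 0) (g7_2 : ((x2 * y3) - (vv *: (y3 * x2))) = ((y2 * x3) - (vv *: (x3 * y2)))) :
  ((qc x2 x3) * (qc x1 y2)) = ((((qc x1 y2) * (qc x2 x3)) + (vv^-1 *: (y2 * (qc (qc x1 x2) x3)))) - (vv *: ((qc (qc x1 x2) x3) * y2))).
Proof.
exact: (@cert_ok A [:: x1; x2; x3; y1; y2; y3] [:: ((TMul (TAt 0) (TAt 2)), (TMul (TAt 2) (TAt 0))); ((TMul (TAt 1) (TAt 4)), (TMul (TAt 4) (TAt 1))); ((TAdd (TSub (TMul (TMul (TAt 1) (TAt 1)) (TAt 5)) (TSc (CAdd CV CVi) (TMul (TMul (TAt 1) (TAt 5)) (TAt 1)))) (TMul (TAt 5) (TMul (TAt 1) (TAt 1)))), TZero); ((TSub (TMul (TAt 1) (TAt 5)) (TSc CV (TMul (TAt 5) (TAt 1)))), (TSub (TMul (TAt 4) (TAt 2)) (TSc CV (TMul (TAt 2) (TAt 4)))))]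
  [:: (0%Z, 1%Z)]
  [:: ([:: ((-2)%Z, (-1)%Z)], [:: 4], 0, [:: 1]);
    ([:: (0%Z, 1%Z)], [:: ], 0, [:: 1; 4]);
    ([:: (0%Z, (-1)%Z)], [:: 1], 0, [:: 4]);
    ([:: ((-2)%Z, 1%Z)], [:: 1; 4], 0, [:: ]);
    ([:: ((-2)%Z, (-1)%Z)], [:: ], 1, [:: 0; 2]);
    ([:: (0%Z, 1%Z)], [:: 0], 1, [:: 2]);
    ([:: (0%Z, (-1)%Z)], [:: 0; 2], 1, [:: ]);
    ([:: ((-2)%Z, 1%Z)], [:: 2], 1, [:: 0]);
    ([:: ((-2)%Z, 1%Z)], [:: ], 2, [:: 0]);
    ([:: (0%Z, (-1)%Z)], [:: 0], 2, [:: ]);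
    ([:: ((-1)%Z, (-1)%Z)], [:: 0], 3, [:: 1]);
    ([:: (0%Z, 1%Z)], [:: 0; 1], 3, [:: ]);
    ([:: ((-3)%Z, 1%Z)], [:: ], 3, [:: 1; 0]);
    ([:: ((-2)%Z, (-1)%Z)], [:: 1], 3, [:: 0])]
  (TMul (TAdd (TNeg (TMul (TAt 1) (TAt 2))) (TSc CVi (TMul (TAt 2) (TAt 1)))) (TAdd (TNeg (TMul (TAt 0) (TAt 4))) (TSc CVi (TMul (TAt 4) (TAt 0))))) (TSub (TAdd (TMul (TAdd (TNeg (TMul (TAt 0) (TAt 4))) (TSc CVi (TMul (TAt 4) (TAt 0)))) (TAdd (TNeg (TMul (TAt 1) (TAt 2))) (TSc CVi (TMul (TAt 2) (TAt 1))))) (TSc CVi (TMul (TAt 4) (TAdd (TNeg (TMul (TAdd (TNeg (TMul (TAt 0) (TAt 1))) (TSc CVi (TMul (TAt 1) (TAt 0)))) (TAt 2))) (TSc CVi (TMul (TAt 2) (TAdd (TNeg (TMul (TAt 0) (TAt 1))) (TSc CVi (TMul (TAt 1) (TAt 0)))))))))) (TSc CV (TMul (TAdd (TNeg (TMul (TAdd (TNeg (TMul (TAt 0) (TAt 1))) (TSc CVi (TMul (TAt 1) (TAt 0)))) (TAt 2))) (TSc CVi (TMul (TAt 2) (TAdd (TNeg (TMul (TAt 0) (TAt 1))) (TSc CVi (TMul (TAt 1) (TAt 0))))))) (TAt 4))))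
  ltac:(vm_compute; reflexivity) (conj cxx13 (conj cxy22 (conj sxy23 (conj g7_2 I)))) scale1_nz).
Qed.
Lemma L_comm (A : algType Qv) (x y z : A) (hxy : (x * y) = (y * x)) (hxz : (x * z) = (z * x)) :
  (x * (qc y z)) = ((qc y z) * x).
Proof.
exact: (@cert_ok A [:: x; y; z] [:: ((TMul (TAt 0) (TAt 1)), (TMul (TAt 1) (TAt 0))); ((TMul (TAt 0) (TAt 2)), (TMul (TAt 2) (TAt 0)))]
  [:: (0%Z, 1%Z)]
  [:: ([:: (0%Z, (-1)%Z)], [:: ], 0, [:: 2]);
    ([:: ((-1)%Z, 1%Z)], [:: 2], 0, [:: ]);
    ([:: ((-1)%Z, 1%Z)], [:: ], 1, [:: 1]);
    ([:: (0%Z, (-1)%Z)], [:: 1], 1, [:: ])]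
  (TMul (TAt 0) (TAdd (TNeg (TMul (TAt 1) (TAt 2))) (TSc CVi (TMul (TAt 2) (TAt 1))))) (TMul (TAdd (TNeg (TMul (TAt 1) (TAt 2))) (TSc CVi (TMul (TAt 2) (TAt 1)))) (TAt 0))
  ltac:(vm_compute; reflexivity) (conj hxy (conj hxz I)) scale1_nz).
Qed.

Lemma L_jac (A : algType Qv) (x y z : A) (hxz : (x * z) = (z * x)) :
  (qc (qc x y) z) = (qc x (qc y z)).
Proof.
exact: (@cert_ok A [:: x; y; z] [:: ((TMul (TAt 0) (TAt 2)), (TMul (TAt 2) (TAt 0)))]
  [:: (0%Z, 1%Z)]
  [:: ([:: ((-1)%Z, 1%Z)], [:: ], 0, [:: 1]);
    ([:: ((-1)%Z, (-1)%Z)], [:: 1], 0, [:: ])]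
  (TAdd (TNeg (TMul (TAdd (TNeg (TMul (TAt 0) (TAt 1))) (TSc CVi (TMul (TAt 1) (TAt 0)))) (TAt 2))) (TSc CVi (TMul (TAt 2) (TAdd (TNeg (TMul (TAt 0) (TAt 1))) (TSc CVi (TMul (TAt 1) (TAt 0))))))) (TAdd (TNeg (TMul (TAt 0) (TAdd (TNeg (TMul (TAt 1) (TAt 2))) (TSc CVi (TMul (TAt 2) (TAt 1)))))) (TSc CVi (TMul (TAdd (TNeg (TMul (TAt 1) (TAt 2))) (TSc CVi (TMul (TAt 2) (TAt 1)))) (TAt 0))))
  ltac:(vm_compute; reflexivity) (conj hxz I) scale1_nz).
Qed.

Lemma L_R6s (A : algType Qv) (x y z : A) (hxy : (x * y) = (vv^-1 *: (y * x))) (hzy : (z * y) = (y * z)) :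
  ((qc x z) * y) = (vv^-1 *: (y * (qc x z))).
Proof.
exact: (@cert_ok A [:: x; y; z] [:: ((TMul (TAt 0) (TAt 1)), (TSc CVi (TMul (TAt 1) (TAt 0)))); ((TMul (TAt 2) (TAt 1)), (TMul (TAt 1) (TAt 2)))]
  [:: (0%Z, 1%Z)]
  [:: ([:: (0%Z, (-1)%Z)], [:: ], 0, [:: 2]);
    ([:: ((-1)%Z, 1%Z)], [:: 2], 0, [:: ]);
    ([:: ((-2)%Z, 1%Z)], [:: ], 1, [:: 0]);
    ([:: (0%Z, (-1)%Z)], [:: 0], 1, [:: ])]
  (TMul (TAdd (TNeg (TMul (TAt 0) (TAt 2))) (TSc CVi (TMul (TAt 2) (TAt 0)))) (TAt 1)) (TSc CVi (TMul (TAt 1) (TAdd (TNeg (TMul (TAt 0) (TAt 2))) (TSc CVi (TMul (TAt 2) (TAt 0))))))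
  ltac:(vm_compute; reflexivity) (conj hxy (conj hzy I)) scale1_nz).
Qed.

Lemma L_R7s (A : algType Qv) (x y z w u : A) (hab : (x * y) = (((y * x) + (vv^-1 *: (u * w))) - (vv *: (w * u)))) (heb : (z * y) = (y * z)) (heb2 : (z * u) = (u * z)) :
  ((qc x z) * y) = (((y * (qc x z)) + (vv^-1 *: (u * (qc w z)))) - (vv *: ((qc w z) * u))).
Proof.
exact: (@cert_ok A [:: x; y; z; w; u] [:: ((TMul (TAt 0) (TAt 1)), (TSub (TAdd (TMul (TAt 1) (TAt 0)) (TSc CVi (TMul (TAt 4) (TAt 3)))) (TSc CV (TMul (TAt 3) (TAt 4))))); ((TMul (TAt 2) (TAt 1)), (TMul (TAt 1) (TAt 2))); ((TMul (TAt 2) (TAt 4)), (TMul (TAt 4) (TAt 2)))]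
  [:: (0%Z, 1%Z)]
  [:: ([:: (0%Z, (-1)%Z)], [:: ], 0, [:: 2]);
    ([:: ((-1)%Z, 1%Z)], [:: 2], 0, [:: ]);
    ([:: ((-1)%Z, 1%Z)], [:: ], 1, [:: 0]);
    ([:: (0%Z, (-1)%Z)], [:: 0], 1, [:: ]);
    ([:: ((-2)%Z, 1%Z)], [:: ], 2, [:: 3]);
    ([:: (1%Z, (-1)%Z)], [:: 3], 2, [:: ])]
  (TMul (TAdd (TNeg (TMul (TAt 0) (TAt 2))) (TSc CVi (TMul (TAt 2) (TAt 0)))) (TAt 1)) (TSub (TAdd (TMul (TAt 1) (TAdd (TNeg (TMul (TAt 0) (TAt 2))) (TSc CVi (TMul (TAt 2) (TAt 0))))) (TSc CVi (TMul (TAt 4) (TAdd (TNeg (TMul (TAt 3) (TAt 2))) (TSc CVi (TMul (TAt 2) (TAt 3))))))) (TSc CV (TMul (TAdd (TNeg (TMul (TAt 3) (TAt 2))) (TSc CVi (TMul (TAt 2) (TAt 3)))) (TAt 4))))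
  ltac:(vm_compute; reflexivity) (conj hab (conj heb (conj heb2 I))) scale1_nz).
Qed.

Lemma L_R1 (A : algType Qv) (x y : A)  :
  (x * y) = ((vv^-1 *: (y * x)) - (qc x y)).
Proof.
exact: (@cert_ok A [:: x; y] [:: ]
  [:: (0%Z, 1%Z)]
  [:: ]
  (TMul (TAt 0) (TAt 1)) (TSub (TSc CVi (TMul (TAt 1) (TAt 0))) (TAdd (TNeg (TMul (TAt 0) (TAt 1))) (TSc CVi (TMul (TAt 1) (TAt 0)))))
  ltac:(vm_compute; reflexivity) I scale1_nz).
Qed.


Section Main.
Variables (n : nat) (A : algType Qv) (K Ki Kb E F Eb Fb : nat -> A).
Hypothesis Hq : qq_rels n K Ki Kb E F Eb Fb.

Definition ea p q := Eij E p q.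
Definition eb p q := Ebij E Eb p q.

Lemma ea1 p : ea p p.+1 = E p.
Proof. by rewrite /ea /Eij subnn. Qed.
Lemma eb1 p : eb p p.+1 = Eb p.
Proof. by rewrite /eb /Ebij subnn. Qed.

Lemma eaS p q : (p < q)%N -> ea p q.+1 = qc (ea p q) (E q).
Proof.
move=> H; rewrite /ea /Eij subSS -(subnSK H) /=.
by have -> : (p + (q - p.+1).+1)%N = q by lia.
Qed.
Lemma ebS p q : (p < q)%N -> eb p q.+1 = qc (ea p q) (Eb q).
Proof.
move=> H; rewrite /eb /ea /Ebij /Eij subSS -(subnSK H) /=.
by have -> : (p + (q - p.+1).+1)%N = q by lia.
Qed.

Lemma inE_of m : (1 <= m)%N -> (m < n)%N -> Defs.inE n m.
Proof. by move=> H1 H2; rewrite /Defs.inE H1 /=; lia. Qed.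

Lemma cEE m1 m2 : (1 <= m1)%N -> (m1 < n)%N -> (1 <= m2)%N -> (m2 < n)%N ->
  (m1.+1 < m2)%N || (m2.+1 < m1)%N -> E m1 * E m2 = E m2 * E m1.
Proof.
move=> H1 H2 H3 H4 H5; by case: (qq5d Hq (inE_of H1 H2) (inE_of H3 H4) H5).
Qed.

Lemma cEEb m1 m2 : (1 <= m1)%N -> (m1 < n)%N -> (1 <= m2)%N -> (m2 < n)%N ->
  m1 != m2.+1 -> m2 != m1.+1 -> E m1 * Eb m2 = Eb m2 * E m1.
Proof. by move=> H1 H2 H3 H4 H5 H6; case: (qq5c Hq (inE_of H1 H2) (inE_of H3 H4) H5 H6). Qed.

Lemma sEE i j : (1 <= i)%N -> (i < n)%N -> (1 <= j)%N -> (j < n)%N ->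
  (i == j.+1) || (j == i.+1) -> serre (E i) (E j) = 0 /\ serre (E i) (Eb j) = 0.
Proof.
move=> H1 H2 H3 H4 H5; case: (qq6 Hq (inE_of H1 H2) (inE_of H3 H4) H5) => G1 G2 _ _.
by rewrite /serre -!expr2.
Qed.

Lemma g7 i : (1 <= i)%N -> (i.+1 < n)%N ->
  E i * Eb i.+1 - vv *: (Eb i.+1 * E i) = Eb i * E i.+1 - vv *: (E i.+1 * Eb i).
Proof. by move=> *; apply: (qq5f Hq); apply: inE_of; lia. Qed.


Lemma farA m p q : (1 <= p)%N -> (p < q)%N -> (q <= n)%N -> (1 <= m)%N -> (m < n)%N ->
  (q < m)%N || (m.+1 < p)%N ->
  [/\ E m * ea p q = ea p q * E m, Eb m * ea p q = ea p q * Eb m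
    & E m * eb p q = eb p q * E m].
Proof.
move=> Hp Hpq Hqn Hm1 Hmn Hfar.
elim: q Hpq Hqn Hfar => [|q IH] //.
rewrite ltnS leq_eqVlt => /orP [/eqP <-|Hpq] Hqn Hfar.
  rewrite ea1 eb1; split.
  - apply: cEE; lia.
  - apply: esym; apply: cEEb; lia.
  - apply: cEEb; lia.
have Hf' : (q < m)%N || (m.+1 < p)%N by lia.
have [IH1 IH2 IH3] := IH Hpq (ltnW Hqn) Hf'.
rewrite eaS // ebS //; split.
- apply: L_comm => //; apply: cEE; lia.
- apply: L_comm => //; apply: esym; apply: cEEb; lia.
- apply: L_comm => //; apply: cEEb; lia.
Qed.

Ltac L := lia.
Lemma farR p q r s : (1 <= p)%N -> (p < q)%N -> (q < r)%N -> (r < s)%N -> (s <= n)%N ->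
  [/\ ea p q * ea r s = ea r s * ea p q, ea p q * eb r s = eb r s * ea p q
    & eb p q * ea r s = ea r s * eb p q].
Proof.
move=> Hp Hpq Hqr.
elim: s => [|s IH] //.
rewrite ltnS leq_eqVlt => /orP [/eqP <-|Hrs] Hsn.
  have [F1 F2 F3] := @farA r p q ltac:(L) ltac:(L) ltac:(L) ltac:(L) ltac:(L) ltac:(L).
  by rewrite ea1 eb1; split; apply: esym.
have [IH1 IH2 IH3] := IH Hrs (ltnW Hsn).
have [F1 F2 F3] := @farA s p q ltac:(L) ltac:(L) ltac:(L) ltac:(L) ltac:(L) ltac:(L).
rewrite eaS // ebS //; split; apply: L_comm => //; exact: esym.
Qed.

Lemma assocA p m q : (1 <= p)%N -> (p < m)%N -> (m < q)%N -> (q <= n)%N ->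
  ea p q = qc (ea p m) (ea m q).
Proof.
move=> Hp Hpm; elim: q => [|q IH] //.
rewrite ltnS leq_eqVlt => /orP [/eqP <-|Hmq] Hqn.
  by rewrite eaS // ea1.
have [F1 F2 F3] := @farA q p m ltac:(L) ltac:(L) ltac:(L) ltac:(L) ltac:(L) ltac:(L).
rewrite eaS; last by L.
by rewrite IH //; [rewrite L_jac ?eaS //; exact: esym | L].
Qed.

Lemma assocB p m q : (1 <= p)%N -> (p < m)%N -> (m < q)%N -> (q <= n)%N ->
  eb p q = qc (ea p m) (eb m q).
Proof.
move=> Hp Hpm; elim: q => [|q IH] //.
rewrite ltnS leq_eqVlt => /orP [/eqP <-|Hmq] Hqn.
  by rewrite ebS // eb1.
have [F1 F2 F3] := @farA q p m ltac:(L) ltac:(L) ltac:(L) ltac:(L) ltac:(L) ltac:(L).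
rewrite ebS; last by L.
rewrite (assocA (m:=m)) //; last by L.
by rewrite L_jac ?ebS //; exact: esym.
Qed.

Lemma P3 d p q r : (r - p <= d)%N -> (1 <= p)%N -> (p < q)%N -> (q < r)%N -> (r <= n)%N ->
  serre (ea p q) (ea q r) = 0 /\ serre (ea q r) (ea p q) = 0.
Proof.
elim: d p q r => [|d IH] p q r Hd Hp Hpq Hqr Hrn; first by L.
case: (ltngtP q p.+1) => [Hq1|Hq1|Hq1]; first by L.
  have [S12 S21] := IH p p.+1 q ltac:(L) ltac:(L) ltac:(L) ltac:(L) ltac:(L).
  have [S23 S32] := IH p.+1 q r ltac:(L) ltac:(L) ltac:(L) ltac:(L) ltac:(L).
  have [C13 _ _] := @farR p p.+1 q r ltac:(L) ltac:(L) ltac:(L) ltac:(L) ltac:(L).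
  rewrite (@assocA p p.+1 q) ?ltnSn //; try L.
  split; [exact: (A_P3a 0 0 0 S12 C13 S23) | exact: (A_P3b 0 0 0 C13 S32)].
case: (ltngtP r q.+1) => [Hr1|Hr1|Hr1]; first by L.
  have [S12 S21] := IH p q q.+1 ltac:(L) ltac:(L) ltac:(L) ltac:(L) ltac:(L).
  have [S23 S32] := IH q q.+1 r ltac:(L) ltac:(L) ltac:(L) ltac:(L) ltac:(L).
  have [C13 _ _] := @farR p q q.+1 r ltac:(L) ltac:(L) ltac:(L) ltac:(L) ltac:(L).
  rewrite (@assocA q q.+1 r) ?ltnSn //; try L.
  split; [exact: (A_P3c 0 0 0 S12 C13) | exact: (A_P3d 0 0 0 C13 S21 S23 S32)].
subst q r; rewrite !ea1.
have [H1 _] := @sEE p p.+1 ltac:(L) ltac:(L) ltac:(L) ltac:(L) ltac:(L).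
have [H2 _] := @sEE p.+1 p ltac:(L) ltac:(L) ltac:(L) ltac:(L) ltac:(L).
by [].
Qed.

Lemma P3' p q r : (1 <= p)%N -> (p < q)%N -> (q < r)%N -> (r <= n)%N ->
  serre (ea p q) (ea q r) = 0 /\ serre (ea q r) (ea p q) = 0.
Proof. by move=> *; apply: (@P3 (r - p)). Qed.

Lemma P4 d p q r : (r - p <= d)%N -> (1 <= p)%N -> (p < q)%N -> (q < r)%N -> (r <= n)%N ->
  serre (ea p q) (eb q r) = 0 /\ serre (ea q r) (eb p q) = 0.
Proof.
elim: d p q r => [|d IH] p q r Hd Hp Hpq Hqr Hrn; first by L.
case: (ltngtP q p.+1) => [Hq1|Hq1|Hq1]; first by L.
  have [S12 S21] := @P3' p p.+1 q ltac:(L) ltac:(L) ltac:(L) ltac:(L).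
  have [T23 T32] := IH p.+1 q r ltac:(L) ltac:(L) ltac:(L) ltac:(L) ltac:(L).
  have [C13 D13 _] := @farR p p.+1 q r ltac:(L) ltac:(L) ltac:(L) ltac:(L) ltac:(L).
  rewrite (@assocA p p.+1 q) ?ltnSn //; try L.
  rewrite (@assocB p p.+1 q) ?ltnSn //; try L.
  split; [exact: (A_P4a 0 0 0 S12 D13 T23) | exact: (A_P4c 0 0 0 C13 T32)].
case: (ltngtP r q.+1) => [Hr1|Hr1|Hr1]; first by L.
  have [S12 S21] := @P3' p q q.+1 ltac:(L) ltac:(L) ltac:(L) ltac:(L).
  have [S23 S32] := @P3' q q.+1 r ltac:(L) ltac:(L) ltac:(L) ltac:(L).
  have [T12 T21] := IH p q q.+1 ltac:(L) ltac:(L) ltac:(L) ltac:(L) ltac:(L).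
  have [_ D13 _] := @farR p q q.+1 r ltac:(L) ltac:(L) ltac:(L) ltac:(L) ltac:(L).
  have [_ _ C31] := @farR p q q.+1 r ltac:(L) ltac:(L) ltac:(L) ltac:(L) ltac:(L).
  rewrite (@assocA q q.+1 r) ?ltnSn //; try L.
  rewrite (@assocB q q.+1 r) ?ltnSn //; try L.
  split; [exact: (A_P4b 0 0 0 S12 D13) | exact: (A_P4d 0 0 0 T21 S23 (esym C31) S32)].
subst q r; rewrite !ea1 !eb1.
have [_ H1] := @sEE p p.+1 ltac:(L) ltac:(L) ltac:(L) ltac:(L) ltac:(L).
have [_ H2] := @sEE p.+1 p ltac:(L) ltac:(L) ltac:(L) ltac:(L) ltac:(L).
by [].
Qed.

Lemma P4' p q r : (1 <= p)%N -> (p < q)%N -> (q < r)%N -> (r <= n)%N ->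
  serre (ea p q) (eb q r) = 0 /\ serre (ea q r) (eb p q) = 0.
Proof. by move=> *; apply: (@P4 (r - p)). Qed.

Lemma P5 d p q : (q.+1 - p <= d)%N -> (1 <= p)%N -> (p < q)%N -> (q < n)%N ->
  ea p q * Eb q - vv *: (Eb q * ea p q) = eb p q * E q - vv *: (E q * eb p q).
Proof.
elim: d p q => [|d IH] p q Hd Hp Hpq Hqn; first by L.
case: (ltngtP q p.+1) => [Hq1|Hq1|Hq1]; first by L.
  have G := IH p.+1 q ltac:(L) ltac:(L) ltac:(L) ltac:(L).
  have [C13 _ _] := @farR p p.+1 q q.+1 ltac:(L) ltac:(L) ltac:(L) ltac:(L) ltac:(L).
  have [_ D13 _] := @farR p p.+1 q q.+1 ltac:(L) ltac:(L) ltac:(L) ltac:(L) ltac:(L).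
  rewrite !ea1 !eb1 in C13 D13.
  rewrite (@assocA p p.+1 q) ?ltnSn //; try L.
  rewrite (@assocB p p.+1 q) ?ltnSn //; try L.
  rewrite ea1; exact: (@A_P5a _ (E p) (ea p.+1 q) (E q) 0 (eb p.+1 q) (Eb q) C13 D13 G).
subst q; rewrite ea1 eb1; apply: g7; L.
Qed.

Lemma P5' p q : (1 <= p)%N -> (p < q)%N -> (q < n)%N ->
  ea p q * Eb q - vv *: (Eb q * ea p q) = eb p q * E q - vv *: (E q * eb p q).
Proof. by move=> *; apply: (@P5 (q.+1 - p)). Qed.

Lemma P2 d p q : (q - p <= d)%N -> (1 <= p)%N -> (p < q)%N -> (q <= n)%N ->
  ea p q * eb p q = eb p q * ea p q.
Proof.
elim: d p q => [|d IH] p q Hd Hp Hpq Hqn; first by L.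
case: (ltngtP q p.+1) => [Hq1|Hq1|Hq1]; first by L.
  have [S12 _] := @P3' p p.+1 q ltac:(L) ltac:(L) ltac:(L) ltac:(L).
  have [T12 _] := @P4' p p.+1 q ltac:(L) ltac:(L) ltac:(L) ltac:(L).
  have C22 := IH p.+1 q ltac:(L) ltac:(L) ltac:(L) ltac:(L).
  rewrite (@assocA p p.+1 q) ?ltnSn //; try L.
  rewrite (@assocB p p.+1 q) ?ltnSn //; try L.
  exact: (A_P2 0 S12 T12 C22).
subst q; rewrite ea1 eb1.
by case: (qq5c Hq (inE_of (m:=p) ltac:(L) ltac:(L)) (inE_of (m:=p) ltac:(L) ltac:(L)) ltac:(L) ltac:(L)).
Qed.

Lemma P2' p q : (1 <= p)%N -> (p < q)%N -> (q <= n)%N -> ea p q * eb p q = eb p q * ea p q.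
Proof. by move=> *; apply: (@P2 (q - p)). Qed.

Lemma innerE p m q : (1 <= p)%N -> (p < m)%N -> (m.+1 < q)%N -> (q <= n)%N ->
  E m * ea p q = ea p q * E m /\ Eb m * ea p q = ea p q * Eb m.
Proof.
move=> Hp Hpm; elim: q => [|q IH] //.
rewrite ltnS leq_eqVlt => /orP [/eqP Hqe|Hmq] Hqn.
  subst q. rewrite eaS ?eaS; try L.
  have [F1 F2 F3] := @farA m.+1 p m ltac:(L) ltac:(L) ltac:(L) ltac:(L) ltac:(L) ltac:(L).
  have [_ S21] := @P3' p m m.+1 ltac:(L) ltac:(L) ltac:(L) ltac:(L).
  have [_ T21] := @P4' p m m.+1 ltac:(L) ltac:(L) ltac:(L) ltac:(L).
  rewrite !ea1 in S21 T21.
  have [S23 T23] := @sEE m m.+1 ltac:(L) ltac:(L) ltac:(L) ltac:(L) ltac:(L).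
  have G1 := @P5' p m ltac:(L) ltac:(L) ltac:(L).
  have G2 := @g7 m ltac:(L) ltac:(L).
  have C22 := @cEEb m m ltac:(L) ltac:(L) ltac:(L) ltac:(L) ltac:(L) ltac:(L).
  split; apply: esym.
  - exact: (A_inE 0 0 0 (esym F1) S21 S23).
  - exact: (A_inF (esym F1) (esym F2) G1 S21 T21 C22 T23 G2).
have [IH1 IH2] := IH Hmq (ltnW Hqn).
rewrite eaS; last by L.
split; apply: L_comm => //.
- apply: cEE; L.
- apply: esym; apply: cEEb; L.
Qed.

Lemma comm_build (X : A) k l : (k < l)%N ->
  (forall m, (k <= m)%N -> (m < l)%N -> X * E m = E m * X /\ X * Eb m = Eb m * X) ->
  X * ea k l = ea k l * X /\ X * eb k l = eb k l * X.
Proof.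
move=> Hkl H; elim: l Hkl H => [|l IH] //.
rewrite ltnS leq_eqVlt => /orP [/eqP <-|Hkl] H.
  by rewrite ea1 eb1; apply: H.
have [IH1 IH2] := IH Hkl (fun m H1 H2 => H m H1 (ltnW H2 : (m < l.+1)%N)).
have [H1 H2] := H l (ltnW Hkl) (ltnSn l).
by rewrite eaS // ebS //; split; apply: L_comm.
Qed.

Lemma R0c i j k l : (1 <= i)%N -> (i < k)%N -> (k < l)%N -> (l < j)%N -> (j <= n)%N ->
  ea i j * eb k l = eb k l * ea i j.
Proof.
move=> Hi Hik Hkl Hlj Hjn.
have [] := @comm_build (ea i j) k l Hkl; last by [].
move=> m H1 H2; have [F1 F2] := @innerE i m j ltac:(L) ltac:(L) ltac:(L) ltac:(L).
by split; apply: esym.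
Qed.

Lemma R0e i j k l : (1 <= k)%N -> (k < i)%N -> (i < j)%N -> (j < l)%N -> (l <= n)%N ->
  ea i j * eb k l = eb k l * ea i j.
Proof.
move=> *.
have [_ D13 _] := @farR k i j l ltac:(L) ltac:(L) ltac:(L) ltac:(L) ltac:(L).
have [_ S21] := @P3' k i j ltac:(L) ltac:(L) ltac:(L) ltac:(L).
have [T23 _] := @P4' i j l ltac:(L) ltac:(L) ltac:(L) ltac:(L).
rewrite (@assocB k j l) ?(@assocA k i j); try L.
exact: (A_R0e 0 0 0 D13 S21 T23).
Qed.

Lemma R1 i j l : (1 <= i)%N -> (i < j)%N -> (j < l)%N -> (l <= n)%N ->
  ea i j * eb j l = vv^-1 *: (eb j l * ea i j) - eb i l.
Proof. by move=> *; rewrite (@assocB i j l) //; apply: L_R1. Qed.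

Lemma R2 i j l : (1 <= i)%N -> (i < j)%N -> (j < l)%N -> (l <= n)%N ->
  ea i j * eb i l = vv *: (eb i l * ea i j).
Proof.
move=> *; have [T _] := @P4' i j l ltac:(L) ltac:(L) ltac:(L) ltac:(L).
rewrite (@assocB i j l) //; exact: (A_R2 0 0 T).
Qed.

Lemma R3 i j k l : (1 <= i)%N -> (i < k)%N -> (k < j)%N -> (j < l)%N -> (l <= n)%N ->
  ea i j * eb k l = eb k l * ea i j + (vv - vv^-1) *: (ea k j * eb i l).
Proof.
move=> *.
have [_ D13 _] := @farR i k j l ltac:(L) ltac:(L) ltac:(L) ltac:(L) ltac:(L).
have [_ S21] := @P3' i k j ltac:(L) ltac:(L) ltac:(L) ltac:(L).
have [T23 _] := @P4' k j l ltac:(L) ltac:(L) ltac:(L) ltac:(L).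
rewrite (@assocB k j l) ?(@assocB i j l) ?(@assocA i k j); try L.
exact: (A_R3 0 0 0 D13 S21 T23).
Qed.

Lemma R4 i j k : (1 <= i)%N -> (i < k)%N -> (k < j)%N -> (j <= n)%N ->
  ea i j * eb k j = vv^-1 *: (eb k j * ea i j) + eb i j * ea k j - vv^-1 *: (ea k j * eb i j).
Proof.
move=> *.
have C := @P2' k j ltac:(L) ltac:(L) ltac:(L).
rewrite (@assocB i k j) ?(@assocA i k j); try L.
exact: (A_R4 (ea i k) 0 C).
Qed.

Lemma R5 i j k : (1 <= k)%N -> (k < i)%N -> (i.+1 < j)%N -> (j <= n)%N ->
  ea i j * eb k i = vv^-1 *: (eb k i * ea i j)
    - (Eb i * ea i.+1 j - vv^-1 *: (ea i.+1 j * Eb i)) * ea k i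
    + vv^-1 *: (ea k i * (Eb i * ea i.+1 j - vv^-1 *: (ea i.+1 j * Eb i))).
Proof.
move=> *.
have [C13 _ C31] := @farR k i i.+1 j ltac:(L) ltac:(L) ltac:(L) ltac:(L) ltac:(L).
have G := @P5' k i ltac:(L) ltac:(L) ltac:(L).
rewrite (@assocA i i.+1 j) ?ea1; try L.
exact: (A_R5 0 C13 G (esym C31)).
Qed.

Lemma R6 i j l : (1 <= i)%N -> (i < l)%N -> (l < j)%N -> (j <= n)%N ->
  ea i j * eb i l = vv^-1 *: (eb i l * ea i j).
Proof.
move=> Hi Hil; elim: j => [|j IH] //.
rewrite ltnS leq_eqVlt => /orP [/eqP <-|Hlj] Hjn.
  have C11 := @P2' i l ltac:(L) ltac:(L) ltac:(L).
  have [T12 _] := @P4' i l l.+1 ltac:(L) ltac:(L) ltac:(L) ltac:(L).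
  have G := @P5' i l ltac:(L) ltac:(L) ltac:(L).
  rewrite eb1 in T12.
  rewrite eaS //; exact: (A_R6b C11 T12 G).
have [_ _ F3] := @farA j i l ltac:(L) ltac:(L) ltac:(L) ltac:(L) ltac:(L) ltac:(L).
rewrite eaS; last by L.
by apply: L_R6s => //; apply: IH => //; L.
Qed.

Lemma R7 i j k l : (1 <= k)%N -> (k < i)%N -> (i < l)%N -> (l < j)%N -> (j <= n)%N ->
  ea i j * eb k l = eb k l * ea i j + vv^-1 *: (eb i l * ea k j) - vv *: (ea k j * eb i l).
Proof.
move=> Hk Hki Hil; elim: j => [|j IH] //.
rewrite ltnS leq_eqVlt => /orP [/eqP <-|Hlj] Hjn.
  have [F1 _ _] := @farA l k i ltac:(L) ltac:(L) ltac:(L) ltac:(L) ltac:(L) ltac:(L).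
  have C22 := @P2' i l ltac:(L) ltac:(L) ltac:(L).
  have [T23 _] := @P4' i l l.+1 ltac:(L) ltac:(L) ltac:(L) ltac:(L).
  have G := @P5' i l ltac:(L) ltac:(L) ltac:(L).
  rewrite eb1 in T23.
  rewrite eaS // eaS; last by L.
  rewrite (@assocB k i l) ?(@assocA k i l); try L.
  exact: (A_R7b 0 (esym F1) C22 T23 G).
have [_ _ F3] := @farA j k l ltac:(L) ltac:(L) ltac:(L) ltac:(L) ltac:(L) ltac:(L).
have [_ _ F3'] := @farA j i l ltac:(L) ltac:(L) ltac:(L) ltac:(L) ltac:(L) ltac:(L).
rewrite eaS ?(@eaS k j); try L.
by apply: L_R7s => //; apply: IH => //; L.
Qed.

Lemma R8 i j k : (1 <= k)%N -> (k < i)%N -> (i < j)%N -> (j <= n)%N ->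
  ea i j * eb k j = vv *: (eb k j * ea i j) - vv *: (ea k j * eb i j) + eb i j * ea k j.
Proof.
move=> *.
have C := @P2' i j ltac:(L) ltac:(L) ltac:(L).
rewrite (@assocB k i j) ?(@assocA k i j); try L.
exact: (A_R8 (ea k i) 0 C).
Qed.
End Main.

Theorem lemma2p10 (n : nat) (A : algType Qv) (K Ki Kb E F Eb Fb : nat -> A) :
  qq_rels n K Ki Kb E F Eb Fb ->
  forall i j k l : nat,
    (1 <= i)%N -> (i < j)%N -> (j <= n)%N ->
    (1 <= k)%N -> (k < l)%N -> (l <= n)%N ->
  let Er := Eij E in
  let Ebr := Ebij E Eb in
  let X := Er i j * Ebr k l in
  let Y := Ebr k l * Er i j in
  ([|| (j < k)%N, (i < k)%N && (l < j)%N, (i == k) && (j == l),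
         (l < i)%N | (k < i)%N && (j < l)%N] -> X = Y) /\
      ((j == k) -> X = vv^-1 *: Y - Ebr i l) /\
      ((i == k) && (j < l)%N -> X = vv *: Y) /\
      ((i < k)%N && (k < j)%N && (j < l)%N ->
        X = Y + (vv - vv^-1) *: (Er k j * Ebr i l)) /\
      ((i < k)%N && (k < j)%N && (j == l) ->
        X = vv^-1 *: Y + Ebr i j * Er k j - vv^-1 *: (Er k j * Ebr i j)) /\
      ((l == i) && (i.+1 < j)%N ->
        X = vv^-1 *: Y
            - (Eb i * Er i.+1 j - vv^-1 *: (Er i.+1 j * Eb i)) * Er k i
            + vv^-1 *: (Er k i * (Eb i * Er i.+1 j - vv^-1 *: (Er i.+1 j * Eb i)))) /\
      ((k == i) && (l < j)%N -> X = vv^-1 *: Y) /\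
      ((k < i)%N && (i < l)%N && (l < j)%N ->
        X = Y + vv^-1 *: (Ebr i l * Er k j) - vv *: (Er k j * Ebr i l)) /\
      ((k < i)%N && (j == l) ->
        X = vv *: Y - vv *: (Er k j * Ebr i j) + Ebr i j * Er k j).
Proof.
move=> Hq i j k l Hi Hij Hjn Hk Hkl Hln Er Ebr X Y.
rewrite /X /Y /Er /Ebr.
change (Eij E) with (ea E) ; change (Ebij E Eb) with (eb E Eb).
split.
  case/orP => [H|]; first by case: (farR Hq (p:=i) (q:=j) (r:=k) (s:=l)); try lia.
  case/orP => [/andP [H1 H2]|]; first by apply: (R0c Hq); lia.
  case/orP => [/andP [/eqP H1 /eqP H2]|]; first by subst k l; apply: (P2' Hq); lia.
  case/orP => [H|]; first by case: (farR Hq (p:=k) (q:=l) (r:=i) (s:=j)); try lia; move=> _ _ ->.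
  move=> /andP [H1 H2]; apply: (R0e Hq); lia.
split; first by move/eqP => H; subst k; apply: (R1 Hq); lia.
split; first by move=> /andP [/eqP H1 H2]; subst k; apply: (R2 Hq); lia.
split; first by move=> /andP [/andP [H1 H2] H3]; apply: (R3 Hq); lia.
split; first by move=> /andP [/andP [H1 H2] /eqP H3]; subst l; apply: (R4 Hq); lia.
split; first by move=> /andP [/eqP H1 H2]; subst l; apply: (R5 Hq); lia.
split; first by move=> /andP [/eqP H1 H2]; subst k; apply: (R6 Hq); lia.
split; first by move=> /andP [/andP [H1 H2] H3]; apply: (R7 Hq); lia.
by move=> /andP [H1 /eqP H3]; subst l; apply: (R8 Hq); lia.
Qed.
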